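(* Let $\alpha_i,\beta_i,\gamma_i$ ($i=1,2,3$) be real numbers such that $$\operatorname{Rank}\begin{pmatrix}\alpha_1&\beta_1&\gamma_1&0&0&0\\ \alpha_2&\beta_2&\gamma_2&0&0&0\\ 0&0&0&\alpha_3&\beta_3&\gamma_3\end{pmatrix}=3,$$ and let $B_1[u]=\alpha_1u(0)+\beta_1u'(0)+\gamma_1u''(0)$, $B_2[u]=\alpha_2u(0)+\beta_2u'(0)+\gamma_2u''(0)$, $B_3[u]=\alpha_3u(1)+\beta_3u'(1)+\gamma_3u''(1)$. Assume the problem $u'''=\varphi$ on $(0,1)$, $B_1[u]=B_2[u]=B_3[u]=0$ has a Green function $G(t,s)$, and set $G_1=\partial G/\partial t$, $G_2=\partial^2 G/\partial t^2$, $$M_0=\max_{0\le t\le1}\int_0^1|G(t,s)|ds,\quad M_1=\max_{0\le t\le1}\int_0^1|G_1(t,s)|ds,\quad M_2=\max_{0\le t\le1}\int_0^1|G_2(t,s)|ds.$$ For $M>0$ let $\mathcal{D}_M=\{(t,x,y,z): 0\le t\le1,\ |x|\le M_0M,\ |y|\le M_1M,\ |z|\le M_2M\}$. Suppose there exists $M>0$ such that the function $f(t,x,y,z)$ is continuous in $\mathcal{D}_M$ and $|f(t,x,y,z)|\le M$ for all $(t,x,y,z)\in\mathcal{D}_M$. Then the problem $$u'''(t)=f(t,u(t),u'(t),u''(t)),\ 0<t<1,\qquad B_1[u]=B_2[u]=B_3[u]=0$$ has a solution $u$ satisfying $|u(t)|\le M_0M$, $|u'(t)|\le M_1M$, $|u''(t)|\le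 M_2M$ for all $0\le t\le 1$.
   Context: The Green function $G(t,s)$ of the linear problem $u'''=\varphi$, $B_1[u]=B_2[u]=B_3[u]=0$ is the function on $[0,1]^2$ such that for every $\varphi\in C[0,1]$ the unique solution of this linear problem is $u(t)=\int_0^1G(t,s)\varphi(s)\,ds$; then $u'(t)=\int_0^1G_1(t,s)\varphi(s)ds$, $u''(t)=\int_0^1G_2(t,s)\varphi(s)ds$, where $G_1$ is continuous on $[0,1]^2$ and $G_2$ is continuous on $[0,1]^2$ except on the line $t=s$. *)

(* Defs.v *)
From Stdlib Require Import Reals.
From Coquelicot Require Import Coquelicot.
Open Scope R_scope.

(* Rank of the 3x6 matrix
     ( a1 b1 c1 0  0  0  )
     ( a2 b2 c2 0  0  0  )
     ( 0  0  0  a3 b3 c3 )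
   equals 3, i.e. its three rows are linearly independent:
   x*row1 + y*row2 + z*row3 = 0 (all six entries) forces x = y = z = 0. *)
Definition rank3_bc (a1 b1 c1 a2 b2 c2 a3 b3 c3 : R) : Prop :=
  forall x y z : R,
    x * a1 + y * a2 + z * 0 = 0 ->
    x * b1 + y * b2 + z * 0 = 0 ->
    x * c1 + y * c2 + z * 0 = 0 ->
    x * 0 + y * 0 + z * a3 = 0 ->
    x * 0 + y * 0 + z * b3 = 0 ->
    x * 0 + y * 0 + z * c3 = 0 ->
    x = 0 /\ y = 0 /\ z = 0.

Definition I01 (t : R) : Prop := 0 <= t <= 1.

Definition cont_on01 (g : R -> R) : Prop :=
  forall t, I01 t -> filterlim g (within I01 (locally t)) (locally (g t)).

Definition Bform (a b c x y z : R) : R := a * x + b * y + c * z.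

Definition is_bvp_solution (a1 b1 c1 a2 b2 c2 a3 b3 c3 : R)
  (rhs : R -> R -> R -> R -> R) (u u1 u2 : R -> R) : Prop :=
  cont_on01 u /\ cont_on01 u1 /\ cont_on01 u2 /\
  (forall t, 0 < t < 1 ->
     is_derive u t (u1 t) /\ is_derive u1 t (u2 t) /\
     is_derive u2 t (rhs t (u t) (u1 t) (u2 t))) /\
  Bform a1 b1 c1 (u 0) (u1 0) (u2 0) = 0 /\
  Bform a2 b2 c2 (u 0) (u1 0) (u2 0) = 0 /\
  Bform a3 b3 c3 (u 1) (u1 1) (u2 1) = 0.

Definition Sq01 (p : R * R) : Prop := I01 (fst p) /\ I01 (snd p).

Definition is_green_function (a1 b1 c1 a2 b2 c2 a3 b3 c3 : R)
  (G G1 G2 : R -> R -> R) : Prop :=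
  (forall p, Sq01 p ->
     filterlim (fun q : R * R => G (fst q) (snd q)) (within Sq01 (locally p))
       (locally (G (fst p) (snd p)))) /\
  (forall p, Sq01 p ->
     filterlim (fun q : R * R => G1 (fst q) (snd q)) (within Sq01 (locally p))
       (locally (G1 (fst p) (snd p)))) /\
  (forall p, Sq01 p -> fst p <> snd p ->
     filterlim (fun q : R * R => G2 (fst q) (snd q))
       (within (fun q => Sq01 q /\ fst q <> snd q) (locally p))
       (locally (G2 (fst p) (snd p)))) /\
  (forall t s, 0 < t < 1 -> I01 s -> is_derive (fun r => G r s) t (G1 t s)) /\
  (forall t s, 0 < t < 1 -> I01 s -> t <> s ->
     is_derive (fun r => G1 r s) t (G2 t s)) /\
  (forall phi : R -> R, cont_on01 phi ->
     is_bvp_solution a1 b1 c1 a2 b2 c2 a3 b3 c3 (fun t _ _ _ => phi t)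
       (fun t => RInt (fun s => G t s * phi s) 0 1)
       (fun t => RInt (fun s => G1 t s * phi s) 0 1)
       (fun t => RInt (fun s => G2 t s * phi s) 0 1) /\
     (forall v v1 v2,
        is_bvp_solution a1 b1 c1 a2 b2 c2 a3 b3 c3 (fun t _ _ _ => phi t) v v1 v2 ->
        forall t, I01 t -> v t = RInt (fun s => G t s * phi s) 0 1)).

Definition is_max01 (g : R -> R) (m : R) : Prop :=
  (forall t, I01 t -> g t <= m) /\ (exists t, I01 t /\ g t = m).

Definition DM (M0 M1 M2 M : R) (p : R * R * R * R) : Prop :=
  let '(t, x, y, z) := p in
  0 <= t <= 1 /\ Rabs x <= M0 * M /\ Rabs y <= M1 * M /\ Rabs z <= M2 * M.

Definition cont_on4 (f : R -> R -> R -> R -> R) (D : R * R * R * R -> Prop) : Prop :=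
  forall p, D p ->
    filterlim (fun q : R * R * R * R => let '(t, x, y, z) := q in f t x y z)
      (within D (locally p))
      (locally (let '(t, x, y, z) := p in f t x y z)).

(* Main.v *)
Require Import Defs.
From Stdlib Require Import Reals.
From Coquelicot Require Import Coquelicot.
From Stdlib Require Import Lra Lia ZArith List IndefiniteDescription.
From HB Require Import structures.
From mathcomp Require all_boot all_order all_algebra.
From mathcomp Require all_classical all_reals topology normedtype.
From mathcomp Require Rstruct Rstruct_topology.

Module MC.
From mathcomp Require Import all_boot all_order all_algebra.
From mathcomp Require Import all_classical all_reals topology normedtype.
From mathcomp Require Import Rstruct Rstruct_topology.
Import Order.TTheory GRing.Theory Num.Theory.
Local Open Scope classical_set_scope.

Lemma pw_cluster (u : nat -> R -> R) (B : R) :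
  (forall n t, Rle (Rabs (u n t)) B) ->
  exists g : R -> R, forall (l : list R) (eps : R) (N : nat), Rlt 0 eps ->
    exists n, (N <= n)%coq_nat /\ (forall t, In t l -> Rlt (Rabs (Rminus (u n t) (g t))) eps).
Proof.
move=> uB.
have := @tychonoff R (fun=> R) (fun=> `[(- B)%R, B]) (fun=> @segment_compact _ _ _).
set K := [set f | _].
move=> cK.
have FK : (u @ \oo) K.
  exists 0%N => // n _ i /=.
  rewrite in_itv /=; apply/andP; split; apply/RleP;
  move: (uB n i); unfold Rabs; destruct Rcase_abs; change (- B)%R with (Ropp B); lra.
have [g [_ cg]] := cK _ _ FK.
exists g => l eps N eps0.
have FX : (u @ \oo) (u @` [set n | (N <= n)%N]).
  exists N => // n Nn; exists n => //.
have NY : nbhs g [set f | forall t, In t l -> Rlt (Rabs (Rminus (f t) (g t))) eps].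
  elim: l => [|a l IH].
    by apply: filterE => f t [].
  have H1 : nbhs g [set f | Rlt (Rabs (Rminus (f a) (g a))) eps].
    have := @proj_continuous R (fun=> R) a g.
    move=> /(_ (ball (g a) eps)) /=.
    have Hb : nbhs (g a) (ball (g a) eps) by apply: nbhsx_ballx; apply/RltP.
    move=> /(_ Hb) Hp.
    have Hp' : nbhs g (proj a @^-1` ball (g a) eps) := Hp.
    apply: (filterS _ Hp') => f /=.
    rewrite /ball /= => /RltP.
    by rewrite -Rabs_Ropp Ropp_minus_distr.
  have H12 := @filterI _ _ (@nbhs_pfilter _ g) _ _ H1 IH.
  apply: (filterS _ H12) => f [h1 h2] t /= [<-|tl]; [exact: h1| exact: h2].
have [f [[n Nn <-] Hf]] := cg _ _ FX NY.
exists n; split; last exact: Hf.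
by apply/ssrnat.leP.
Qed.

End MC.

Import ListNotations.
Open Scope R_scope.

Definition Fcont (F : R -> R -> R -> R -> R) := forall t x y z eps, 0 < eps -> exists del, 0 < del /\
  forall t' x' y' z', Rabs (t' - t) < del -> Rabs (x' - x) < del -> Rabs (y' - y) < del ->
  Rabs (z' - z) < del -> Rabs (F t' x' y' z' - F t x y z) < eps.

Lemma abs4 a b c d : Rabs (a + b + c + d) <= Rabs a + Rabs b + Rabs c + Rabs d.
Proof.
  eapply Rle_trans. apply Rabs_triang. apply Rplus_le_compat_r.
  eapply Rle_trans. apply Rabs_triang. apply Rplus_le_compat_r. apply Rabs_triang.
Qed.

Lemma abs3 a b c : Rabs (a + b + c) <= Rabs a + Rabs b + Rabs c.
Proof.
  eapply Rle_trans. apply Rabs_triang. apply Rplus_le_compat_r. apply Rabs_triang.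
Qed.

Lemma abs_mul_pos h x : 0 <= h -> Rabs (h * x) = h * Rabs x.
Proof. intros; rewrite Rabs_mult, Rabs_pos_eq; auto. Qed.

Section Scheme.
Variable F : R -> R -> R -> R -> R.
Variables p q r : R.

Definition stepS (h tk : R) (s : R*R*R) : R*R*R :=
  let '(x,y,z) := s in let ph := F tk x y z in
  (x + h*y + h*h/2*z + h*h*h/6*ph, y + h*z + h*h/2*ph, z + h*ph).

Fixpoint sch (n : nat) (lam : R) (k : nat) : R*R*R :=
  match k with O => (lam*p, lam*q, lam*r)
  | S k' => stepS (/ INR n) (INR k' / INR n) (sch n lam k') end.

Definition SX n lam k := fst (fst (sch n lam k)).
Definition SY n lam k := snd (fst (sch n lam k)).
Definition SZ n lam k := snd (sch n lam k).
Definition Sphi n lam k := F (INR k / INR n) (SX n lam k) (SY n lam k) (SZ n lam k).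

Lemma sch_S n lam k :
  let h := / INR n in
  SX n lam (S k) = SX n lam k + h * SY n lam k + h*h/2 * SZ n lam k + h*h*h/6 * Sphi n lam k /\
  SY n lam (S k) = SY n lam k + h * SZ n lam k + h*h/2 * Sphi n lam k /\
  SZ n lam (S k) = SZ n lam k + h * Sphi n lam k.
Proof.
  intros h. unfold Sphi, SX, SY, SZ, h; simpl. destruct (sch n lam k) as [[x y] z]; simpl; repeat split; reflexivity.
Qed.

Lemma sch_0 n lam : SX n lam 0 = lam * p /\ SY n lam 0 = lam * q /\ SZ n lam 0 = lam * r.
Proof. repeat split. Qed.

Variable M : R.
Hypothesis FM : forall t x y z, Rabs (F t x y z) <= M.

Lemma sch_dev n lam k : (0 < n)%nat ->
  let T := INR k / INR n in
  Rabs (SZ n lam k - lam * r) <= M * T /\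
  Rabs (SY n lam k - lam * (q + r * T)) <= M * (T * T / 2) /\
  Rabs (SX n lam k - lam * (p + q * T + r * (T * T / 2))) <= M * (T * T * T / 6).
Proof.
  intros Hn. assert (Hn' : 0 < INR n) by (apply lt_0_INR; lia).
  assert (HM : 0 <= M) by (eapply Rle_trans; [apply Rabs_pos | apply (FM 0 0 0 0)]).
  induction k as [|k IH].
  - simpl; unfold Rdiv; rewrite Rmult_0_l. destruct (sch_0 n lam) as [-> [-> ->]].
    repeat split; replace (_ - _) with 0 by ring; rewrite Rabs_R0; lra.
  - destruct IH as [IZ [IY IX]].
    destruct (sch_S n lam k) as [EX [EY EZ]].
    set (h := / INR n) in *.
    assert (Hh : 0 <= h) by (unfold h; left; apply Rinv_0_lt_compat; lra).
    assert (HT : 0 <= INR k / INR n) by (unfold Rdiv; apply Rmult_le_pos; [apply pos_INR| left; apply Rinv_0_lt_compat; lra]).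
    set (T := INR k / INR n) in *.
    replace (INR (S k) / INR n) with (T + h) by (unfold T, h; rewrite S_INR; field; lra).
    set (dX := SX n lam k - lam * (p + q * T + r * (T * T / 2))) in *.
    set (dY := SY n lam k - lam * (q + r * T)) in *.
    set (dZ := SZ n lam k - lam * r) in *.
    set (ph := Sphi n lam k) in *.
    assert (Hph : Rabs ph <= M) by apply FM.
    rewrite EX, EY, EZ.
    assert (H2 : 0 <= h * h / 2) by (assert (0 <= h*h) by nra; lra).
    assert (H3 : 0 <= h * h * h / 6) by (assert (0 <= h*h*h) by (apply Rmult_le_pos; nra); lra).
    split; [|split].
    + replace (SZ n lam k + h * ph - lam * r) with (dZ + h * ph) by (unfold dZ; ring).
      eapply Rle_trans; [apply Rabs_triang|]. rewrite abs_mul_pos by lra.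
      assert (h * Rabs ph <= h * M) by (apply Rmult_le_compat_l; lra). nra.
    + replace (SY n lam k + h * SZ n lam k + h * h / 2 * ph - lam * (q + r * (T + h)))
        with (dY + h * dZ + h * h / 2 * ph) by (unfold dY, dZ; ring).
      eapply Rle_trans; [apply abs3|]. rewrite !abs_mul_pos by assumption.
      assert (h * Rabs dZ <= h * (M * T)) by (apply Rmult_le_compat_l; lra).
      assert (h * h / 2 * Rabs ph <= h * h / 2 * M) by (apply Rmult_le_compat_l; lra).
      nra.
    + assert (E : SX n lam k + h * SY n lam k + h * h / 2 * SZ n lam k + h * h * h / 6 * ph -
        lam * (p + q * (T + h) + r * ((T + h) * (T + h) / 2)) =
        dX + h * dY + h * h / 2 * dZ + h * h * h / 6 * ph).
      { unfold dX, dY, dZ. field. }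
      rewrite E.
      eapply Rle_trans; [apply abs4|]. rewrite !abs_mul_pos by assumption.
      assert (h * Rabs dY <= h * (M * (T * T / 2))) by (apply Rmult_le_compat_l; lra).
      assert (h * h / 2 * Rabs dZ <= h * h / 2 * (M * T)) by (apply Rmult_le_compat_l; lra).
      assert (h * h * h / 6 * Rabs ph <= h * h * h / 6 * M) by (apply Rmult_le_compat_l; lra).
      nra.
Qed.


Lemma h_bounds n : (0 < n)%nat -> 0 < / INR n /\ / INR n <= 1.
Proof.
  intros Hn. assert (H1 : 1 <= INR n) by (apply (le_INR 1); lia).
  split. apply Rinv_0_lt_compat; lra.
  rewrite <- Rinv_1. apply Rinv_le_contravar; lra.
Qed.

Lemma coef_bound h a : 0 <= h <= 1 -> Rabs (h * a) <= Rabs a.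
Proof.
  intros Hh. rewrite abs_mul_pos by lra.
  assert (0 <= Rabs a) by apply Rabs_pos. nra.
Qed.

Hypothesis Fc : Fcont F.

Lemma sch_cont n k : (0 < n)%nat -> forall lam0 eps, 0 < eps -> exists del, 0 < del /\
  forall lam, Rabs (lam - lam0) < del ->
  Rabs (SX n lam k - SX n lam0 k) < eps /\ Rabs (SY n lam k - SY n lam0 k) < eps /\
  Rabs (SZ n lam k - SZ n lam0 k) < eps.
Proof.
  intros Hn. destruct (h_bounds n Hn) as [Hh0 Hh1].
  induction k as [|k IH]; intros lam0 eps He.
  - set (A := Rabs p + Rabs q + Rabs r + 1).
    assert (HA : 0 < A) by (unfold A; pose proof (Rabs_pos p); pose proof (Rabs_pos q);
      pose proof (Rabs_pos r); lra).
    exists (eps / A). split. apply Rdiv_lt_0_compat; lra.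
    intros lam Hl. destruct (sch_0 n lam) as [-> [-> ->]]. destruct (sch_0 n lam0) as [-> [-> ->]].
    assert (Hd : Rabs (lam - lam0) * A < eps).
    { apply (Rmult_lt_compat_r A) in Hl; auto. unfold Rdiv in Hl. rewrite Rmult_assoc, Rinv_l in Hl; lra. }
    assert (HlA : 0 <= Rabs (lam - lam0)) by apply Rabs_pos.
    pose proof (Rabs_pos p); pose proof (Rabs_pos q); pose proof (Rabs_pos r).
    repeat split; rewrite <- Rmult_minus_distr_r, Rabs_mult; unfold A in Hd; nra.
  - set (t := INR k / INR n).
    destruct (Fc t (SX n lam0 k) (SY n lam0 k) (SZ n lam0 k) (eps/4)) as [dF [HdF HF]]; [lra|].
    destruct (IH lam0 (Rmin dF (eps/4))) as [del [Hdel Hc]].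
    { apply Rmin_glb_lt; lra. }
    exists del; split; auto. intros lam Hl.
    destruct (Hc lam Hl) as [HX [HY HZ]].
    assert (Hm1 := Rmin_l dF (eps/4)). assert (Hm2 := Rmin_r dF (eps/4)).
    assert (Hph : Rabs (Sphi n lam k - Sphi n lam0 k) < eps/4).
    { unfold Sphi. apply HF; try lra. unfold t, Rminus. rewrite Rplus_opp_r, Rabs_R0; lra. }
    destruct (sch_S n lam k) as [EX [EY EZ]]. destruct (sch_S n lam0 k) as [EX0 [EY0 EZ0]].
    set (h := / INR n) in *.
    assert (H2 : 0 <= h * h / 2 <= 1) by (split; nra).
    assert (H3 : 0 <= h * h * h / 6 <= 1) by (assert (0 <= h*h <= 1) by (split; nra); split; nra).
    rewrite EX, EY, EZ, EX0, EY0, EZ0.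
    split; [|split].
    + replace (SX n lam k + h * SY n lam k + h * h / 2 * SZ n lam k + h * h * h / 6 * Sphi n lam k -
        (SX n lam0 k + h * SY n lam0 k + h * h / 2 * SZ n lam0 k + h * h * h / 6 * Sphi n lam0 k))
        with ((SX n lam k - SX n lam0 k) + h * (SY n lam k - SY n lam0 k) +
              h * h / 2 * (SZ n lam k - SZ n lam0 k) + h * h * h / 6 * (Sphi n lam k - Sphi n lam0 k)) by ring.
      eapply Rle_lt_trans; [apply abs4|].
      pose proof (coef_bound h (SY n lam k - SY n lam0 k) ltac:(lra)).
      pose proof (coef_bound (h*h/2) (SZ n lam k - SZ n lam0 k) H2).
      pose proof (coef_bound (h*h*h/6) (Sphi n lam k - Sphi n lam0 k) H3).
      lra.
    + replace (SY n lam k + h * SZ n lam k + h * h / 2 * Sphi n lam k -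
        (SY n lam0 k + h * SZ n lam0 k + h * h / 2 * Sphi n lam0 k))
        with ((SY n lam k - SY n lam0 k) + h * (SZ n lam k - SZ n lam0 k) +
              h * h / 2 * (Sphi n lam k - Sphi n lam0 k)) by ring.
      eapply Rle_lt_trans; [apply abs3|].
      pose proof (coef_bound h (SZ n lam k - SZ n lam0 k) ltac:(lra)).
      pose proof (coef_bound (h*h/2) (Sphi n lam k - Sphi n lam0 k) H2).
      lra.
    + replace (SZ n lam k + h * Sphi n lam k - (SZ n lam0 k + h * Sphi n lam0 k))
        with ((SZ n lam k - SZ n lam0 k) + h * (Sphi n lam k - Sphi n lam0 k)) by ring.
      eapply Rle_lt_trans; [apply Rabs_triang|].
      pose proof (coef_bound h (Sphi n lam k - Sphi n lam0 k) ltac:(lra)).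
      lra.
Qed.


Variables a3 b3 c3 : R.
Definition gsh n lam := a3 * SX n lam n + b3 * SY n lam n + c3 * SZ n lam n.
Definition cc := a3 * (p + q + r / 2) + b3 * (q + r) + c3 * r.
Definition EE := (Rabs a3 / 6 + Rabs b3 / 2 + Rabs c3) * M.

Lemma gsh_cont n : (0 < n)%nat -> continuity (gsh n).
Proof.
  intros Hn x. unfold continuity_pt, continue_in, limit1_in, limit_in. simpl. unfold R_dist.
  intros eps He.
  set (A := Rabs a3 + Rabs b3 + Rabs c3 + 1).
  assert (HA : 0 < A) by (unfold A; pose proof (Rabs_pos a3); pose proof (Rabs_pos b3);
      pose proof (Rabs_pos c3); lra).
  destruct (sch_cont n n Hn x (eps / A)) as [del [Hdel Hc]].
  { apply Rdiv_lt_0_compat; lra. }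
  exists del; split; auto. intros y [_ Hy].
  destruct (Hc y Hy) as [HX [HY HZ]].
  unfold gsh.
  replace (a3 * SX n y n + b3 * SY n y n + c3 * SZ n y n - (a3 * SX n x n + b3 * SY n x n + c3 * SZ n x n))
    with (a3 * (SX n y n - SX n x n) + b3 * (SY n y n - SY n x n) + c3 * (SZ n y n - SZ n x n)) by ring.
  eapply Rle_lt_trans; [apply abs3|]. rewrite !Rabs_mult.
  assert (E1 : eps / A * A = eps) by (field; lra).
  pose proof (Rabs_pos a3); pose proof (Rabs_pos b3); pose proof (Rabs_pos c3).
  assert (Rabs a3 * Rabs (SX n y n - SX n x n) <= Rabs a3 * (eps / A)) by (apply Rmult_le_compat_l; lra).
  assert (Rabs b3 * Rabs (SY n y n - SY n x n) <= Rabs b3 * (eps / A)) by (apply Rmult_le_compat_l; lra).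
  assert (Rabs c3 * Rabs (SZ n y n - SZ n x n) <= Rabs c3 * (eps / A)) by (apply Rmult_le_compat_l; lra).
  assert (0 < eps / A) by (apply Rdiv_lt_0_compat; lra).
  assert (E2 : Rabs a3 * (eps/A) + Rabs b3 * (eps/A) + Rabs c3 * (eps/A) = eps - eps/A)
    by (unfold A; field; lra).
  lra.
Qed.

Lemma gsh_dev n lam : (0 < n)%nat -> Rabs (gsh n lam - lam * cc) <= EE.
Proof.
  intros Hn. destruct (sch_dev n lam n Hn) as [HZ [HY HX]].
  assert (HT : INR n / INR n = 1) by (field; apply not_0_INR; lia).
  rewrite HT in HZ, HY, HX.
  unfold gsh, cc, EE.
  replace (a3 * SX n lam n + b3 * SY n lam n + c3 * SZ n lam n - lam * (a3 * (p + q + r / 2) + b3 * (q + r) + c3 * r))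
   with (a3 * (SX n lam n - lam * (p + q * 1 + r * (1 * 1 / 2))) + b3 * (SY n lam n - lam * (q + r * 1)) + c3 * (SZ n lam n - lam * r)) by field.
  eapply Rle_trans; [apply abs3|]. rewrite !Rabs_mult.
  pose proof (Rabs_pos a3); pose proof (Rabs_pos b3); pose proof (Rabs_pos c3).
  assert (Rabs a3 * Rabs (SX n lam n - lam * (p + q * 1 + r * (1 * 1 / 2))) <= Rabs a3 * (M * (1 * 1 * 1 / 6))) by (apply Rmult_le_compat_l; lra).
  assert (Rabs b3 * Rabs (SY n lam n - lam * (q + r * 1)) <= Rabs b3 * (M * (1 * 1 / 2))) by (apply Rmult_le_compat_l; lra).
  assert (Rabs c3 * Rabs (SZ n lam n - lam * r) <= Rabs c3 * (M * 1)) by (apply Rmult_le_compat_l; lra).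
  lra.
Qed.

Definition LL := EE / Rabs cc + 1.

Lemma shoot n : (0 < n)%nat -> cc <> 0 -> exists lam, Rabs lam <= LL /\ gsh n lam = 0.
Proof.
  intros Hn Hc.
  assert (HM : 0 <= M) by (eapply Rle_trans; [apply Rabs_pos | apply (FM 0 0 0 0)]).
  assert (HE : 0 <= EE) by (unfold EE; pose proof (Rabs_pos a3); pose proof (Rabs_pos b3);
      pose proof (Rabs_pos c3); apply Rmult_le_pos; lra).
  assert (Hac : 0 < Rabs cc) by (apply Rabs_pos_lt; auto).
  assert (HL : 0 < LL) by (unfold LL; assert (0 <= EE / Rabs cc) by (apply Rdiv_le_0_compat; lra); lra).
  assert (HLc : LL * Rabs cc = EE + Rabs cc) by (unfold LL; field; lra).
  pose proof (gsh_dev n (- LL) Hn) as D1. pose proof (gsh_dev n LL Hn) as D2.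
  apply Rabs_le_between in D1. apply Rabs_le_between in D2.
  destruct (Rlt_or_le 0 cc) as [Hp|Hneg].
  - rewrite Rabs_pos_eq in HLc by lra.
    destruct (IVT (gsh n) (- LL) LL (gsh_cont n Hn)) as [z [Hz1 Hz2]]; try lra.
    exists z; split; auto. apply Rabs_le_between; lra.
  - assert (cc < 0) by (destruct Hneg; auto; contradiction).
    rewrite Rabs_left in HLc by lra.
    destruct (IVT (fun l => - gsh n l) (- LL) LL) as [z [Hz1 Hz2]]; try lra.
    { apply continuity_opp, gsh_cont, Hn. }
    exists z; split. apply Rabs_le_between; lra. lra.
Qed.


Lemma sch_bounds n lam k L : (0 < n)%nat -> (k <= n)%nat -> Rabs lam <= L ->
  Rabs (SZ n lam k) <= L * Rabs r + M /\ Rabs (SY n lam k) <= L * (Rabs q + Rabs r) + M /\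
  Rabs (SX n lam k) <= L * (Rabs p + Rabs q + Rabs r) + M.
Proof.
  intros Hn Hk HL. destruct (sch_dev n lam k Hn) as [HZ [HY HX]].
  assert (HM : 0 <= M) by (eapply Rle_trans; [apply Rabs_pos | apply (FM 0 0 0 0)]).
  assert (Hn' : 0 < INR n) by (apply lt_0_INR; lia).
  assert (HT : 0 <= INR k / INR n <= 1).
  { split. apply Rdiv_le_0_compat; auto; apply pos_INR.
    apply (Rmult_le_reg_r (INR n)); auto. unfold Rdiv; rewrite Rmult_assoc, Rinv_l, Rmult_1_r by lra.
    rewrite Rmult_1_l; apply le_INR; auto. }
  set (T := INR k / INR n) in *.
  pose proof (Rabs_pos p); pose proof (Rabs_pos q); pose proof (Rabs_pos r); pose proof (Rabs_pos lam).
  assert (HT2 : 0 <= T * T <= 1) by (split; nra).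
  assert (HT3 : 0 <= T * T * T <= 1) by (split; nra).
  split; [|split].
  - replace (SZ n lam k) with ((SZ n lam k - lam * r) + lam * r) by ring.
    eapply Rle_trans; [apply Rabs_triang|]. rewrite Rabs_mult.
    assert (Rabs lam * Rabs r <= L * Rabs r) by (apply Rmult_le_compat_r; lra). nra.
  - replace (SY n lam k) with ((SY n lam k - lam * (q + r * T)) + lam * (q + r * T)) by ring.
    eapply Rle_trans; [apply Rabs_triang|]. rewrite Rabs_mult.
    assert (Rabs (q + r * T) <= Rabs q + Rabs r).
    { eapply Rle_trans; [apply Rabs_triang|]. rewrite Rabs_mult, (Rabs_pos_eq T) by lra. nra. }
    assert (Rabs lam * Rabs (q + r * T) <= L * (Rabs q + Rabs r)).
    { apply Rmult_le_compat; auto using Rabs_pos. }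
    nra.
  - replace (SX n lam k) with ((SX n lam k - lam * (p + q * T + r * (T * T / 2))) + lam * (p + q * T + r * (T * T / 2))) by ring.
    eapply Rle_trans; [apply Rabs_triang|]. rewrite Rabs_mult.
    assert (Rabs (p + q * T + r * (T * T / 2)) <= Rabs p + Rabs q + Rabs r).
    { eapply Rle_trans; [apply abs3|]. rewrite !Rabs_mult, (Rabs_pos_eq T), (Rabs_pos_eq (T * T / 2)) by lra. nra. }
    assert (Rabs lam * Rabs (p + q * T + r * (T * T / 2)) <= L * (Rabs p + Rabs q + Rabs r)).
    { apply Rmult_le_compat; auto using Rabs_pos. }
    nra.
Qed.

Lemma sch_incr n lam k : (0 < n)%nat ->
  let h := / INR n in
  Rabs (SZ n lam (S k) - SZ n lam k - h * Sphi n lam k) <= h * 0 /\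
  Rabs (SY n lam (S k) - SY n lam k - h * SZ n lam k) <= h * (h * M) /\
  Rabs (SX n lam (S k) - SX n lam k - h * SY n lam k) <= h * (h * (Rabs (SZ n lam k) + M)).
Proof.
  intros Hn h. destruct (h_bounds n Hn) as [Hh0 Hh1]. fold h in Hh0, Hh1.
  destruct (sch_S n lam k) as [EX [EY EZ]]. fold h in EX, EY, EZ.
  pose proof (FM (INR k / INR n) (SX n lam k) (SY n lam k) (SZ n lam k)) as Hph. fold (Sphi n lam k) in Hph.
  rewrite EX, EY, EZ. split; [|split].
  - replace (SZ n lam k + h * Sphi n lam k - SZ n lam k - h * Sphi n lam k) with 0 by ring.
    rewrite Rabs_R0; lra.
  - replace (SY n lam k + h * SZ n lam k + h * h / 2 * Sphi n lam k - SY n lam k - h * SZ n lam k)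
      with (h * h / 2 * Sphi n lam k) by ring.
    rewrite abs_mul_pos by nra.
    assert (0 <= h * h) by nra. assert (h * h / 2 * Rabs (Sphi n lam k) <= h * h / 2 * M) by (apply Rmult_le_compat_l; lra).
    pose proof (Rabs_pos (Sphi n lam k)). nra.
  - replace (SX n lam k + h * SY n lam k + h * h / 2 * SZ n lam k + h * h * h / 6 * Sphi n lam k - SX n lam k - h * SY n lam k)
      with (h * h / 2 * SZ n lam k + h * h * h / 6 * Sphi n lam k) by ring.
    eapply Rle_trans; [apply Rabs_triang|].
    assert (0 <= h * h) by nra. assert (0 <= h * h * h) by nra.
    rewrite !abs_mul_pos by nra.
    pose proof (Rabs_pos (Sphi n lam k)). pose proof (Rabs_pos (SZ n lam k)).
    assert (h * h * h / 6 * Rabs (Sphi n lam k) <= h * h * h / 6 * M) by (apply Rmult_le_compat_l; lra).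
    assert (h * h * h <= h * h) by nra.
    nra.
Qed.

End Scheme.

Lemma disc (a b : nat -> R) (h c w E : R) (j d : nat) : 0 <= h ->
  (forall i, (j <= i < j + d)%nat -> Rabs (a (S i) - a i - h * b i) <= h * E) ->
  (forall i, (j <= i < j + d)%nat -> Rabs (b i - c) <= w) ->
  Rabs (a (j + d)%nat - a j - INR d * h * c) <= INR d * h * (w + E).
Proof.
  intros Hh Ha Hb. induction d as [|d IH].
  - rewrite Nat.add_0_r. simpl. replace (a j - a j - 0 * h * c) with 0 by ring. rewrite Rabs_R0. lra.
  - rewrite Nat.add_succ_r, S_INR.
    assert (IH' := IH (fun i Hi => Ha i ltac:(lia)) (fun i Hi => Hb i ltac:(lia))).
    pose proof (Ha (j + d)%nat ltac:(lia)) as H1. pose proof (Hb (j + d)%nat ltac:(lia)) as H2.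
    replace (a (S (j + d)) - a j - (INR d + 1) * h * c) with
      ((a (j + d)%nat - a j - INR d * h * c) + (a (S (j + d)) - a (j + d)%nat - h * b (j + d)%nat) + h * (b (j + d)%nat - c)) by ring.
    eapply Rle_trans; [apply abs3|]. rewrite abs_mul_pos by lra.
    assert (h * Rabs (b (j + d)%nat - c) <= h * w) by (apply Rmult_le_compat_l; lra).
    nra.
Qed.

Definition kidx (n : nat) (t : R) : nat := Nat.min n (Z.to_nat (Int_part (INR n * t))).

Lemma kidx_spec n t : (0 < n)%nat -> 0 <= t <= 1 ->
  (kidx n t <= n)%nat /\ INR (kidx n t) / INR n <= t /\ t < INR (kidx n t) / INR n + / INR n.
Proof.
  intros Hn Ht. assert (Hn' : 0 < INR n) by (apply lt_0_INR; lia).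
  destruct (base_Int_part (INR n * t)) as [H1 H2].
  set (z := Int_part (INR n * t)) in *.
  assert (Hz : (0 <= z)%Z).
  { assert (Hz1 : -1 < IZR z) by nra. destruct (Z_lt_le_dec z 0) as [Hlt|Hle]; auto.
    exfalso. assert (Hz2 : (z <= -1)%Z) by lia. apply IZR_le in Hz2. lra. }
  assert (Hm : INR (Z.to_nat z) = IZR z) by (rewrite INR_IZR_INZ, Z2Nat.id; auto).
  assert (Hmn : (Z.to_nat z <= n)%nat).
  { apply INR_le. rewrite Hm. nra. }
  unfold kidx. fold z. rewrite Nat.min_r by auto. rewrite Hm.
  split; auto. split.
  - apply (Rmult_le_reg_r (INR n)); auto. unfold Rdiv; rewrite Rmult_assoc, Rinv_l by lra. lra.
  - apply (Rmult_lt_reg_r (INR n)); auto. rewrite Rmult_plus_distr_r. unfold Rdiv; rewrite Rmult_assoc, Rinv_l by lra. lra.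
Qed.


Lemma kidx_mono n s t : (0 < n)%nat -> 0 <= s <= 1 -> 0 <= t <= 1 -> s <= t -> (kidx n s <= kidx n t)%nat.
Proof.
  intros Hn Hs Ht Hst. destruct (kidx_spec n s Hn Hs) as [_ [Hs1 Hs2]].
  destruct (kidx_spec n t Hn Ht) as [_ [Ht1 Ht2]].
  destruct (le_lt_dec (kidx n s) (kidx n t)) as [H|H]; auto. exfalso.
  assert (Hn' : 0 < INR n) by (apply lt_0_INR; lia).
  assert (H2 : (kidx n t + 1 <= kidx n s)%nat) by lia. apply le_INR in H2. rewrite plus_INR in H2. simpl in H2.
  assert (INR (kidx n t) / INR n + / INR n <= INR (kidx n s) / INR n).
  { unfold Rdiv. rewrite <- (Rmult_1_l (/ INR n)) at 2. rewrite <- Rmult_plus_distr_r.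
    apply Rmult_le_compat_r; [left; apply Rinv_0_lt_compat; lra| lra]. }
  lra.
Qed.

Lemma kidx_0 n : (0 < n)%nat -> kidx n 0 = 0%nat.
Proof.
  intros Hn. destruct (kidx_spec n 0 Hn ltac:(lra)) as [_ [H1 _]].
  assert (Hn' : 0 < INR n) by (apply lt_0_INR; lia).
  destruct (kidx n 0) as [|k]; auto. exfalso.
  assert (0 < INR (S k) / INR n) by (apply Rdiv_lt_0_compat; auto; apply lt_0_INR; lia). lra.
Qed.

Lemma kidx_1 n : (0 < n)%nat -> kidx n 1 = n.
Proof.
  intros Hn. destruct (kidx_spec n 1 Hn ltac:(lra)) as [H0 [_ H1]].
  assert (Hn' : 0 < INR n) by (apply lt_0_INR; lia).
  apply Nat.le_antisymm; auto.
  destruct (le_lt_dec n (kidx n 1)) as [H|H]; auto. exfalso.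
  assert (H2 : (kidx n 1 + 1 <= n)%nat) by lia. apply le_INR in H2. rewrite plus_INR in H2. simpl in H2.
  assert (INR (kidx n 1) / INR n + / INR n <= 1).
  { replace (INR (kidx n 1) / INR n + / INR n) with ((INR (kidx n 1) + 1) / INR n) by (field; lra).
    unfold Rdiv; apply (Rmult_le_reg_r (INR n)); auto.
    rewrite Rmult_assoc, Rinv_l, Rmult_1_r, Rmult_1_l by lra; lra. }
  lra.
Qed.

Lemma nodal_lip (a b : nat -> R) n L E : (0 < n)%nat -> 0 <= E ->
  (forall i, (i < n)%nat -> Rabs (a (S i) - a i - / INR n * b i) <= / INR n * E) ->
  (forall i, (i < n)%nat -> Rabs (b i) <= L) ->
  forall i j, (i <= n)%nat -> (j <= n)%nat ->
  Rabs (a i - a j) <= (L + E) * Rabs (INR i / INR n - INR j / INR n).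
Proof.
  intros Hn HE Ha Hb.
  destruct (h_bounds n Hn) as [Hh0 Hh1].
  assert (key : forall i j, (j <= i <= n)%nat -> Rabs (a i - a j) <= (L + E) * (INR i / INR n - INR j / INR n)).
  { intros i j Hij. pose proof (disc a b (/ INR n) 0 L E j (i - j) ltac:(lra)) as D.
    replace (j + (i - j))%nat with i in D by lia.
    assert (Hd : INR (i - j) * / INR n = INR i / INR n - INR j / INR n) by (rewrite minus_INR by lia; unfold Rdiv; ring).
    rewrite Rmult_0_r, Rminus_0_r, Hd in D. rewrite Rmult_comm. apply D.
    - intros k Hk. apply Ha. lia.
    - intros k Hk. rewrite Rminus_0_r. apply Hb. lia. }
  intros i j Hi Hj. destruct (le_lt_dec j i) as [H|H].
  - rewrite (Rabs_pos_eq (INR i / INR n - INR j / INR n)). apply key; lia.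
    assert (INR j <= INR i) by (apply le_INR; lia). unfold Rdiv. 
    assert (INR j * / INR n <= INR i * / INR n) by (apply Rmult_le_compat_r; lra). lra.
  - rewrite Rabs_minus_sym, (Rabs_minus_sym (INR i / INR n)). rewrite (Rabs_pos_eq (INR j / INR n - INR i / INR n)). apply key; lia.
    assert (INR i <= INR j) by (apply le_INR; lia). unfold Rdiv.
    assert (INR i * / INR n <= INR j * / INR n) by (apply Rmult_le_compat_r; lra). lra.
Qed.

Lemma level_lip (a b : nat -> R) n L E : (0 < n)%nat -> 0 <= E -> 0 <= L ->
  (forall i, (i < n)%nat -> Rabs (a (S i) - a i - / INR n * b i) <= / INR n * E) ->
  (forall i, (i < n)%nat -> Rabs (b i) <= L) ->
  forall s t, 0 <= s <= 1 -> 0 <= t <= 1 ->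
  Rabs (a (kidx n t) - a (kidx n s)) <= (L + E) * (Rabs (t - s) + / INR n).
Proof.
  intros Hn HE HL Ha Hb s t Hs Ht.
  destruct (kidx_spec n s Hn Hs) as [Ks0 [Ks1 Ks2]]. destruct (kidx_spec n t Hn Ht) as [Kt0 [Kt1 Kt2]].
  eapply Rle_trans. apply (nodal_lip a b n L E Hn HE Ha Hb); auto.
  apply Rmult_le_compat_l. lra.
  destruct (Rle_dec s t); [rewrite (Rabs_pos_eq (t - s)) by lra | rewrite (Rabs_left (t - s)) by lra];
  apply Rabs_le_between; split; lra.
Qed.

Lemma level_step (a b : nat -> R) n s t c w E : (0 < n)%nat -> 0 <= s <= 1 -> 0 <= t <= 1 -> s <= t ->
  0 <= w -> 0 <= E ->
  (forall i, (i < n)%nat -> Rabs (a (S i) - a i - / INR n * b i) <= / INR n * E) ->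
  (forall i, (kidx n s <= i < kidx n t)%nat -> Rabs (b i - c) <= w) ->
  Rabs (a (kidx n t) - a (kidx n s) - (t - s) * c) <= (t - s + / INR n) * (w + E) + / INR n * Rabs c.
Proof.
  intros Hn Hs Ht Hst Hw HE Ha Hb.
  destruct (h_bounds n Hn) as [Hh0 Hh1].
  destruct (kidx_spec n s Hn Hs) as [Ks0 [Ks1 Ks2]]. destruct (kidx_spec n t Hn Ht) as [Kt0 [Kt1 Kt2]].
  pose proof (kidx_mono n s t Hn Hs Ht Hst) as Hm.
  set (ks := kidx n s) in *. set (kt := kidx n t) in *.
  pose proof (disc a b (/ INR n) c w E ks (kt - ks) ltac:(lra)) as D.
  replace (ks + (kt - ks))%nat with kt in D by lia.
  assert (Hd : INR (kt - ks) * / INR n = INR kt / INR n - INR ks / INR n) by (rewrite minus_INR by lia; unfold Rdiv; ring).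
  rewrite Hd in D.
  assert (D' : Rabs (a kt - a ks - (INR kt / INR n - INR ks / INR n) * c) <= (INR kt / INR n - INR ks / INR n) * (w + E)).
  { apply D. intros i Hi. apply Ha. lia. intros i Hi. apply Hb. lia. }
  replace (a kt - a ks - (t - s) * c) with ((a kt - a ks - (INR kt / INR n - INR ks / INR n) * c) + ((INR kt / INR n - INR ks / INR n) - (t - s)) * c) by ring.
  eapply Rle_trans; [apply Rabs_triang|]. rewrite Rabs_mult.
  assert (Rabs (INR kt / INR n - INR ks / INR n - (t - s)) <= / INR n) by (apply Rabs_le_between; split; lra).
  assert (Rabs (INR kt / INR n - INR ks / INR n - (t - s)) * Rabs c <= / INR n * Rabs c) by (apply Rmult_le_compat_r; auto using Rabs_pos).
  assert ((INR kt / INR n - INR ks / INR n) * (w + E) <= (t - s + / INR n) * (w + E)) by (apply Rmult_le_compat_r; lra).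
  lra.
Qed.

Lemma level_deriv (a b : nat -> R) n (A : R -> R) x h' c w E eta : (0 < n)%nat -> 0 <= x <= 1 ->
  0 <= x + h' <= 1 -> 0 <= w -> 0 <= E ->
  (forall i, (i < n)%nat -> Rabs (a (S i) - a i - / INR n * b i) <= / INR n * E) ->
  (forall i, (i < n)%nat -> Rabs (INR i / INR n - x) <= Rabs h' + / INR n -> Rabs (b i - c) <= w) ->
  Rabs (a (kidx n x) - A x) <= eta -> Rabs (a (kidx n (x + h')) - A (x + h')) <= eta ->
  Rabs (A (x + h') - A x - h' * c) <= 2 * eta + (Rabs h' + / INR n) * (w + E) + / INR n * Rabs c.
Proof.
  intros Hn Hx Hxh Hw HE Ha Hb H1 H2.
  destruct (h_bounds n Hn) as [Hh0 Hh1].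
  assert (Hn' : 0 < INR n) by (apply lt_0_INR; lia).
  destruct (Rle_dec 0 h') as [Hp|Hneg].
  - assert (S := level_step a b n x (x + h') c w E Hn Hx Hxh ltac:(lra) Hw HE Ha).
    destruct (kidx_spec n x Hn Hx) as [Ks0 [Ks1 Ks2]]. destruct (kidx_spec n (x+h') Hn Hxh) as [Kt0 [Kt1 Kt2]].
    assert (S' : Rabs (a (kidx n (x + h')) - a (kidx n x) - (x + h' - x) * c) <=
      (x + h' - x + / INR n) * (w + E) + / INR n * Rabs c).
    { apply S. intros i Hi. apply Hb. lia.
      assert (INR (kidx n x) <= INR i) by (apply le_INR; lia).
      assert (INR i + 1 <= INR (kidx n (x + h'))) by (rewrite <- S_INR; apply le_INR; lia).
      assert (INR (kidx n x) / INR n <= INR i / INR n) by (unfold Rdiv; apply Rmult_le_compat_r; lra).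
      assert ((INR i + 1) / INR n <= INR (kidx n (x + h')) / INR n) by (unfold Rdiv; apply Rmult_le_compat_r; lra).
      assert ((INR i + 1) / INR n = INR i / INR n + / INR n) by (field; lra).
      rewrite (Rabs_pos_eq h') by lra.
      apply Rabs_le_between; split; lra. }
    replace (x + h' - x) with h' in S' by ring.
    replace (A (x + h') - A x - h' * c) with ((a (kidx n (x + h')) - a (kidx n x) - h' * c)
       - (a (kidx n (x + h')) - A (x + h')) + (a (kidx n x) - A x)) by ring.
    eapply Rle_trans; [apply abs3|]. rewrite Rabs_Ropp. rewrite (Rabs_pos_eq h') by lra. lra.
  - assert (S := level_step a b n (x + h') x c w E Hn Hxh Hx ltac:(lra) Hw HE Ha).
    destruct (kidx_spec n x Hn Hx) as [Ks0 [Ks1 Ks2]]. destruct (kidx_spec n (x+h') Hn Hxh) as [Kt0 [Kt1 Kt2]].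
    assert (S' : Rabs (a (kidx n x) - a (kidx n (x + h')) - (x - (x + h')) * c) <=
      (x - (x + h') + / INR n) * (w + E) + / INR n * Rabs c).
    { apply S. intros i Hi. apply Hb. lia.
      assert (INR (kidx n (x + h')) <= INR i) by (apply le_INR; lia).
      assert (INR i + 1 <= INR (kidx n x)) by (rewrite <- S_INR; apply le_INR; lia).
      assert (INR (kidx n (x + h')) / INR n <= INR i / INR n) by (unfold Rdiv; apply Rmult_le_compat_r; lra).
      assert ((INR i + 1) / INR n <= INR (kidx n x) / INR n) by (unfold Rdiv; apply Rmult_le_compat_r; lra).
      assert ((INR i + 1) / INR n = INR i / INR n + / INR n) by (field; lra).
      rewrite (Rabs_left h') by lra.
      apply Rabs_le_between; split; lra. }
    replace (x - (x + h')) with (- h') in S' by ring.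
    replace (A (x + h') - A x - h' * c) with (- (a (kidx n x) - a (kidx n (x + h')) - - h' * c)
       - (a (kidx n (x + h')) - A (x + h')) + (a (kidx n x) - A x)) by ring.
    eapply Rle_trans; [apply abs3|]. rewrite !Rabs_Ropp. rewrite (Rabs_left h') by lra. lra.
Qed.


Lemma small_h rho : 0 < rho -> exists N0, forall N, (N0 <= N)%nat -> / INR (S N) <= rho.
Proof.
  intros Hr. destruct (archimed (/ rho)) as [H1 _].
  assert (Hu : (0 <= up (/ rho))%Z).
  { apply le_IZR. assert (0 < / rho) by (apply Rinv_0_lt_compat; auto). simpl; lra. }
  exists (Z.to_nat (up (/ rho))). intros N HN.
  assert (HN' : IZR (up (/ rho)) <= INR (S N)).
  { rewrite <- (Z2Nat.id (up (/ rho))) by auto. rewrite <- INR_IZR_INZ. apply le_INR. lia. }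
  assert (0 < INR (S N)) by (apply lt_0_INR; lia).
  rewrite <- (Rinv_inv rho). apply Rinv_le_contravar. apply Rinv_0_lt_compat; auto. lra.
Qed.

Lemma h_mono N N0 : (N0 <= N)%nat -> / INR (S N) <= / INR (S N0).
Proof.
  intros H. apply Rinv_le_contravar. apply lt_0_INR; lia. apply le_INR; lia.
Qed.

Lemma deriv_core (A : R -> R) x c :
  (forall eps, 0 < eps -> exists del, 0 < del /\ forall h', h' <> 0 -> Rabs h' < del ->
     Rabs (A (x + h') - A x - h' * c) <= eps * Rabs h') ->
  derivable_pt_lim A x c.
Proof.
  intros H eps He. destruct (H (eps / 2)) as [del [Hdel Hd]]; [lra|].
  exists (mkposreal del Hdel). simpl. intros h' Hh Hl.
  assert (Ha : 0 < Rabs h') by (apply Rabs_pos_lt; auto).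
  replace ((A (x + h') - A x) / h' - c) with ((A (x + h') - A x - h' * c) / h') by (field; auto).
  unfold Rdiv. rewrite Rabs_mult, Rabs_inv.
  apply (Rmult_lt_reg_r (Rabs h')); auto. rewrite Rmult_assoc, Rinv_l by lra.
  specialize (Hd h' Hh Hl). nra.
Qed.

Lemma arith_final eps hp hh eta w E cabs : 0 < eps -> 0 < hp -> 0 <= hh <= hp / 4 ->
  0 <= eta <= eps * hp / 16 -> 0 <= w -> 0 <= E -> w + E <= eps / 2 -> hh * cabs <= eps * hp / 8 ->
  2 * eta + (hp + hh) * (w + E) + hh * cabs <= eps * hp.
Proof.
  intros. assert ((hp + hh) * (w + E) <= (hp + hp / 4) * (eps / 2)) by (apply Rmult_le_compat; lra).
  nra.
Qed.

Lemma eq_from_eps a b K : (forall eps, 0 < eps -> Rabs (a - b) <= eps * K) -> a = b.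
Proof.
  intros H. destruct (Req_dec a b) as [E|Hne]; auto. exfalso.
  assert (Hp : 0 < Rabs (a - b)) by (apply Rabs_pos_lt; lra).
  destruct (Rle_dec K 0) as [HK|HK].
  - specialize (H 1 Rlt_0_1). lra.
  - set (e := Rabs (a - b) / (2 * K)).
    assert (He : 0 < e) by (unfold e; apply Rdiv_lt_0_compat; lra).
    specialize (H e He). unfold e in H.
    replace (Rabs (a - b) / (2 * K) * K) with (Rabs (a - b) / 2) in H by (field; lra). lra.
Qed.

Definition PWtype := forall (u : nat -> R -> R) (B : R), (forall n t, Rabs (u n t) <= B) ->
  exists g : R -> R, forall (l : list R) (eps : R) (N : nat), 0 < eps ->
    exists n, (N <= n)%nat /\ (forall t, In t l -> Rabs (u n t - g t) < eps).

Definition approx_prop (enc : nat -> R -> R) (g : R -> R) :=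
  forall (l : list R) (eps : R) (N0 : nat), 0 < eps ->
    exists N, (N0 <= N)%nat /\ (forall t, In t l -> Rabs (enc N t - g t) < eps).

Lemma deriv_gen (g : R -> R) (enc : nat -> R -> R) (a b : nat -> nat -> R) (Ef : nat -> R) (sh x c : R) :
  0 < x < 1 -> approx_prop enc g ->
  (forall N t, 0 <= t <= 1 -> enc N (t + sh) = a N (kidx (S N) t)) ->
  (forall N i, (i < S N)%nat -> Rabs (a N (S i) - a N i - / INR (S N) * b N i) <= / INR (S N) * Ef N) ->
  (forall N, 0 <= Ef N) -> (forall rho, 0 < rho -> exists N0, forall N, (N0 <= N)%nat -> Ef N <= rho) ->
  (forall w, 0 < w -> exists del eta0 rho0 l0, 0 < del /\ 0 < eta0 /\ 0 < rho0 /\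
      forall h' N, Rabs h' < del -> / INR (S N) <= rho0 ->
      (forall t, In t l0 -> Rabs (enc N t - g t) < eta0) ->
      forall i, (i < S N)%nat -> Rabs (INR i / INR (S N) - x) <= Rabs h' + / INR (S N) ->
      Rabs (b N i - c) <= w) ->
  derivable_pt_lim (fun t => g (t + sh)) x c.
Proof.
  intros Hx Happ Hdec Hinc HE0 HE Hw.
  apply deriv_core. intros eps He.
  destruct (Hw (eps / 4)) as [del [eta0 [rho0 [l0 [Hdel [Heta0 [Hrho0 Hb]]]]]]]; [lra|].
  exists (Rmin del (Rmin x (1 - x))). split.
  { apply Rmin_glb_lt; auto. apply Rmin_glb_lt; lra. }
  intros h' Hh' Hlt.
  assert (Hl1 : Rabs h' < del) by (eapply Rlt_le_trans; [apply Hlt| apply Rmin_l]).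
  assert (Hl2 : Rabs h' < Rmin x (1 - x)) by (eapply Rlt_le_trans; [apply Hlt| apply Rmin_r]).
  assert (Hl3 : Rabs h' < x) by (eapply Rlt_le_trans; [apply Hl2| apply Rmin_l]).
  assert (Hl4 : Rabs h' < 1 - x) by (eapply Rlt_le_trans; [apply Hl2| apply Rmin_r]).
  assert (Hhp : 0 < Rabs h') by (apply Rabs_pos_lt; auto).
  set (hp := Rabs h') in *.
  assert (Hxh : 0 <= x + h' <= 1) by (unfold hp in *; apply Rabs_def2 in Hl3; apply Rabs_def2 in Hl4; lra).
  assert (Hc0 : 0 < Rabs c + 1) by (pose proof (Rabs_pos c); lra).
  set (rho := Rmin rho0 (Rmin (hp / 4) (eps * hp / (8 * (Rabs c + 1))))).
  assert (Hrho : 0 < rho).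
  { apply Rmin_glb_lt; auto. apply Rmin_glb_lt. lra. apply Rdiv_lt_0_compat; nra. }
  destruct (small_h rho Hrho) as [N0 HN0]. destruct (HE (eps / 4)) as [N1 HN1]; [lra|].
  set (eta := Rmin eta0 (eps * hp / 16)).
  assert (Heta : 0 < eta) by (apply Rmin_glb_lt; nra).
  destruct (Happ ((x + sh) :: (x + h' + sh) :: l0) eta (N0 + N1)%nat Heta) as [N [HN Hpts]].
  assert (HhN : / INR (S N) <= rho) by (apply HN0; lia).
  assert (HEN : Ef N <= eps / 4) by (apply HN1; lia).
  assert (Hr1 := Rmin_l rho0 (Rmin (hp / 4) (eps * hp / (8 * (Rabs c + 1))))).
  assert (Hr2 := Rmin_r rho0 (Rmin (hp / 4) (eps * hp / (8 * (Rabs c + 1))))).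
  assert (Hr3 := Rmin_l (hp / 4) (eps * hp / (8 * (Rabs c + 1)))).
  assert (Hr4 := Rmin_r (hp / 4) (eps * hp / (8 * (Rabs c + 1)))).
  fold rho in Hr1, Hr2.
  assert (He1 := Rmin_l eta0 (eps * hp / 16)). assert (He2 := Rmin_r eta0 (eps * hp / 16)). fold eta in He1, He2.
  destruct (h_bounds (S N) ltac:(lia)) as [Hh0 Hh1].
  assert (P1 : Rabs (a N (kidx (S N) x) - g (x + sh)) <= eta).
  { rewrite <- Hdec by lra. left. apply Hpts. simpl; auto. }
  assert (P2 : Rabs (a N (kidx (S N) (x + h')) - g (x + h' + sh)) <= eta).
  { rewrite <- Hdec by lra. left. apply Hpts. simpl; auto. }
  pose proof (level_deriv (a N) (b N) (S N) (fun t => g (t + sh)) x h' c (eps / 4) (Ef N) eta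
    ltac:(lia) ltac:(lra) Hxh ltac:(lra) (HE0 N) (Hinc N)) as LD.
  cbv beta in LD. fold hp in LD.
  eapply Rle_trans. apply LD; auto.
  { intros i Hi Hti. apply (Hb h' N); auto; try lra.
    intros t Ht. eapply Rlt_le_trans; [apply Hpts; simpl; auto| apply He1]. }
  apply arith_final; try lra. apply HE0.
  assert (Hhc : / INR (S N) * (Rabs c + 1) <= eps * hp / (8 * (Rabs c + 1)) * (Rabs c + 1))
    by (apply Rmult_le_compat_r; lra).
  replace (eps * hp / (8 * (Rabs c + 1)) * (Rabs c + 1)) with (eps * hp / 8) in Hhc by (field; lra).
  pose proof (Rabs_pos c). nra.
Qed.

Lemma lip_gen (g : R -> R) (enc : nat -> R -> R) (a b : nat -> nat -> R) (Ef : nat -> R) (sh Lb Em : R) :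
  approx_prop enc g ->
  (forall N t, 0 <= t <= 1 -> enc N (t + sh) = a N (kidx (S N) t)) ->
  (forall N i, (i < S N)%nat -> Rabs (a N (S i) - a N i - / INR (S N) * b N i) <= / INR (S N) * Ef N) ->
  (forall N, 0 <= Ef N <= Em) -> 0 <= Lb -> (forall N i, (i < S N)%nat -> Rabs (b N i) <= Lb) ->
  forall s t, 0 <= s <= 1 -> 0 <= t <= 1 -> Rabs (g (t + sh) - g (s + sh)) <= (Lb + Em) * Rabs (t - s).
Proof.
  intros Happ Hdec Hinc HE HLb Hb s t Hs Ht.
  apply Rle_plus_epsilon. intros eps He.
  assert (HEm : 0 <= Em) by (destruct (HE 0%nat); lra).
  set (rho := eps / (4 * (Lb + Em + 1))).
  assert (Hrho : 0 < rho) by (apply Rdiv_lt_0_compat; lra).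
  destruct (small_h rho Hrho) as [N0 HN0].
  destruct (Happ [t + sh; s + sh] (eps / 4) N0 ltac:(lra)) as [N [HN Hpts]].
  assert (P1 := Hpts (t + sh) ltac:(simpl; auto)). assert (P2 := Hpts (s + sh) ltac:(simpl; auto)).
  rewrite Hdec in P1, P2 by lra.
  destruct (HE N) as [HE1 HE2].
  pose proof (level_lip (a N) (b N) (S N) Lb (Ef N) ltac:(lia) HE1 HLb (Hinc N) (Hb N) s t Hs Ht) as LL0.
  assert (HhN : / INR (S N) <= rho) by (apply HN0; lia).
  destruct (h_bounds (S N) ltac:(lia)) as [Hh0 Hh1].
  assert (LL1 : (Lb + Ef N) * (Rabs (t - s) + / INR (S N)) <= (Lb + Em) * (Rabs (t - s) + rho)).
  { apply Rmult_le_compat; try lra. pose proof (Rabs_pos (t - s)); lra. }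
  assert (Hr : (Lb + Em) * rho <= eps / 4).
  { unfold rho. replace ((Lb + Em) * (eps / (4 * (Lb + Em + 1)))) with (eps / 4 * ((Lb + Em) / (Lb + Em + 1))) by (field; lra).
    assert ((Lb + Em) / (Lb + Em + 1) <= 1).
    { apply (Rmult_le_reg_r (Lb + Em + 1)); [lra|]. unfold Rdiv. rewrite Rmult_assoc, Rinv_l by lra. lra. }
    assert (0 <= (Lb + Em) / (Lb + Em + 1)) by (apply Rdiv_le_0_compat; lra). nra. }
  replace (g (t + sh) - g (s + sh)) with (- (a N (kidx (S N) t) - g (t + sh)) +
     (a N (kidx (S N) t) - a N (kidx (S N) s)) + (a N (kidx (S N) s) - g (s + sh))) by ring.
  eapply Rle_trans; [apply abs3|]. rewrite Rabs_Ropp. nra.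
Qed.

Lemma bcond_lin (a : nat -> R) n x c L del h' eta : (0 < n)%nat -> 0 <= x <= 1 -> 0 <= L ->
  (forall i j, (i <= n)%nat -> (j <= n)%nat -> Rabs (a i - a j) <= L * Rabs (INR i / INR n - INR j / INR n)) ->
  Rabs (a (kidx n x) - c) < eta -> Rabs h' < del -> / INR n <= del ->
  forall i, (i < n)%nat -> Rabs (INR i / INR n - x) <= Rabs h' + / INR n ->
  Rabs (a i - c) <= 3 * L * del + eta.
Proof.
  intros Hn Hx HL Hlip Hc Hh HhN i Hi Hti.
  destruct (kidx_spec n x Hn Hx) as [K0 [K1 K2]].
  assert (Ht : Rabs (INR i / INR n - INR (kidx n x) / INR n) <= 3 * del).
  { replace (INR i / INR n - INR (kidx n x) / INR n) with ((INR i / INR n - x) + (x - INR (kidx n x) / INR n)) by ring.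
    eapply Rle_trans; [apply Rabs_triang|]. rewrite (Rabs_pos_eq (x - _)) by lra. lra. }
  replace (a i - c) with ((a i - a (kidx n x)) + (a (kidx n x) - c)) by ring.
  eapply Rle_trans; [apply Rabs_triang|].
  assert (Rabs (a i - a (kidx n x)) <= L * (3 * del)).
  { eapply Rle_trans. apply Hlip; lia. apply Rmult_le_compat_l; auto. }
  lra.
Qed.

Lemma Ef_small K : 0 <= K -> forall rho, 0 < rho -> exists N0, forall N, (N0 <= N)%nat -> / INR (S N) * K <= rho.
Proof.
  intros HK rho Hrho. destruct (small_h (rho / (K + 1))) as [N0 HN0].
  apply Rdiv_lt_0_compat; lra.
  exists N0. intros N HN. specialize (HN0 N HN).
  assert (/ INR (S N) * K <= rho / (K + 1) * K) by (apply Rmult_le_compat_r; auto).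
  assert (rho / (K + 1) * K <= rho).
  { replace (rho / (K + 1) * K) with (rho * (K / (K + 1))) by (field; lra).
    assert (K / (K + 1) <= 1).
    { apply (Rmult_le_reg_r (K + 1)); [lra|]. unfold Rdiv. rewrite Rmult_assoc, Rinv_l by lra. lra. }
    assert (0 <= K / (K + 1)) by (apply Rdiv_le_0_compat; lra). nra. }
  lra.
Qed.


Theorem exist_F (PW : PWtype) (F : R -> R -> R -> R -> R) (M p q r a3 b3 c3 : R) :
  (forall t x y z, Rabs (F t x y z) <= M) -> Fcont F -> cc p q r a3 b3 c3 <> 0 ->
  exists lam (u u1 u2 : R -> R),
    u 0 = lam * p /\ u1 0 = lam * q /\ u2 0 = lam * r /\ a3 * u 1 + b3 * u1 1 + c3 * u2 1 = 0 /\
    (exists L, forall s t, 0 <= s <= 1 -> 0 <= t <= 1 ->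
       Rabs (u t - u s) <= L * Rabs (t - s) /\ Rabs (u1 t - u1 s) <= L * Rabs (t - s) /\
       Rabs (u2 t - u2 s) <= L * Rabs (t - s)) /\
    (forall x, 0 < x < 1 -> derivable_pt_lim u x (u1 x) /\ derivable_pt_lim u1 x (u2 x) /\
       derivable_pt_lim u2 x (F x (u x) (u1 x) (u2 x))).
Proof.
  intros FM Fc Hc.
  assert (HM : 0 <= M) by (eapply Rle_trans; [apply Rabs_pos | apply (FM 0 0 0 0)]).
  set (LA := LL p q r M a3 b3 c3).
  assert (HC : {lamf : nat -> R | forall N, Rabs (lamf N) <= LA /\ gsh F p q r a3 b3 c3 (S N) (lamf N) = 0}).
  { exists (fun N => proj1_sig (constructive_indefinite_description _
        (shoot F p q r M FM Fc a3 b3 c3 (S N) ltac:(lia) Hc))).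
    intros N. destruct (constructive_indefinite_description _ _) as [l Hl]. simpl. exact Hl. }
  destruct HC as [lamf Hlamf].
  assert (HLA : 0 <= LA) by (destruct (Hlamf 0%nat) as [H _]; eapply Rle_trans; [apply Rabs_pos|apply H]).
  set (sX := fun N k => SX F p q r (S N) (lamf N) k).
  set (sY := fun N k => SY F p q r (S N) (lamf N) k).
  set (sZ := fun N k => SZ F p q r (S N) (lamf N) k).
  set (sP := fun N k => Sphi F p q r (S N) (lamf N) k).
  pose proof (Rabs_pos p) as Hp0. pose proof (Rabs_pos q) as Hq0. pose proof (Rabs_pos r) as Hr0.
  set (BZ := LA * Rabs r + M). set (BY := LA * (Rabs q + Rabs r) + M).
  set (BX := LA * (Rabs p + Rabs q + Rabs r) + M).
  assert (HBZ : 0 <= BZ) by (unfold BZ; nra). assert (HBY : 0 <= BY) by (unfold BY; nra).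
  assert (HBX : 0 <= BX) by (unfold BX; nra).
  assert (Hb : forall N k, (k <= S N)%nat -> Rabs (sZ N k) <= BZ /\ Rabs (sY N k) <= BY /\ Rabs (sX N k) <= BX).
  { intros N k Hk. apply (sch_bounds F p q r M FM); auto; try lia. apply Hlamf. }
  assert (HbP : forall N k, Rabs (sP N k) <= M) by (intros; apply FM).
  assert (Hh' : forall N, 0 < / INR (S N) /\ / INR (S N) <= 1) by (intros; apply h_bounds; lia).
  assert (HiZ : forall N i, (i < S N)%nat -> Rabs (sZ N (S i) - sZ N i - / INR (S N) * sP N i) <= / INR (S N) * 0).
  { intros N i _. destruct (sch_incr F p q r M FM (S N) (lamf N) i ltac:(lia)) as [H _]. exact H. }
  assert (HiY : forall N i, (i < S N)%nat -> Rabs (sY N (S i) - sY N i - / INR (S N) * sZ N i) <= / INR (S N) * (/ INR (S N) * M)).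
  { intros N i _. destruct (sch_incr F p q r M FM (S N) (lamf N) i ltac:(lia)) as [_ [H _]]. exact H. }
  assert (HiX : forall N i, (i < S N)%nat -> Rabs (sX N (S i) - sX N i - / INR (S N) * sY N i) <= / INR (S N) * (/ INR (S N) * (BZ + M))).
  { intros N i Hi. destruct (sch_incr F p q r M FM (S N) (lamf N) i ltac:(lia)) as [_ [_ H]].
    eapply Rle_trans; [apply H|]. destruct (Hh' N) as [HH1 HH2]. apply Rmult_le_compat_l; [lra|]. apply Rmult_le_compat_l; [lra|].
    destruct (Hb N i ltac:(lia)) as [HB1 _]. unfold sZ in HB1; cbv beta in HB1. lra. }
  assert (HlZ : forall N i j, (i <= S N)%nat -> (j <= S N)%nat ->
     Rabs (sZ N i - sZ N j) <= (M + 0) * Rabs (INR i / INR (S N) - INR j / INR (S N))).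
  { intros N. apply (nodal_lip (sZ N) (sP N) (S N) M 0); auto; try lia; try lra. }
  assert (HlY : forall N i j, (i <= S N)%nat -> (j <= S N)%nat ->
     Rabs (sY N i - sY N j) <= (BZ + / INR (S N) * M) * Rabs (INR i / INR (S N) - INR j / INR (S N))).
  { intros N. apply (nodal_lip (sY N) (sZ N) (S N) BZ (/ INR (S N) * M)); auto; try lia.
    destruct (Hh' N); nra. intros i Hi. apply Hb. lia. }
  assert (HlX : forall N i j, (i <= S N)%nat -> (j <= S N)%nat ->
     Rabs (sX N i - sX N j) <= (BY + / INR (S N) * (BZ + M)) * Rabs (INR i / INR (S N) - INR j / INR (S N))).
  { intros N. apply (nodal_lip (sX N) (sY N) (S N) BY (/ INR (S N) * (BZ + M))); auto; try lia.
    destruct (Hh' N); nra. intros i Hi. apply Hb. lia. }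
  set (enc := fun N t => if Rle_dec t (3/2) then sZ N (kidx (S N) t) else
                         if Rle_dec t (7/2) then sY N (kidx (S N) (t - 2)) else
                         if Rle_dec t (11/2) then sX N (kidx (S N) (t - 4)) else lamf N).
  assert (Hk : forall N s, (kidx (S N) s <= S N)%nat) by (intros; unfold kidx; apply Nat.le_min_l).
  assert (Henc : forall N t, Rabs (enc N t) <= BZ + BY + BX + LA).
  { intros N t. unfold enc.
    destruct (Hb N _ (Hk N t)) as [B1 _]. destruct (Hb N _ (Hk N (t - 2))) as [_ [B2 _]].
    destruct (Hb N _ (Hk N (t - 4))) as [_ [_ B3]]. destruct (Hlamf N) as [B4 _].
    destruct (Rle_dec t (3/2)); [lra|]. destruct (Rle_dec t (7/2)); [lra|].
    destruct (Rle_dec t (11/2)); lra. }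
  destruct (PW enc _ Henc) as [g Hg].
  assert (Happ : approx_prop enc g) by exact Hg.
  assert (DZ : forall N t, 0 <= t <= 1 -> enc N (t + 0) = sZ N (kidx (S N) t)).
  { intros N t Ht. unfold enc. rewrite Rplus_0_r. destruct (Rle_dec t (3/2)); [reflexivity|lra]. }
  assert (DY : forall N t, 0 <= t <= 1 -> enc N (t + 2) = sY N (kidx (S N) t)).
  { intros N t Ht. unfold enc. destruct (Rle_dec (t + 2) (3/2)); [lra|].
    destruct (Rle_dec (t + 2) (7/2)); [|lra]. replace (t + 2 - 2) with t by ring. reflexivity. }
  assert (DX : forall N t, 0 <= t <= 1 -> enc N (t + 4) = sX N (kidx (S N) t)).
  { intros N t Ht. unfold enc. destruct (Rle_dec (t + 4) (3/2)); [lra|].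
    destruct (Rle_dec (t + 4) (7/2)); [lra|]. destruct (Rle_dec (t + 4) (11/2)); [|lra].
    replace (t + 4 - 4) with t by ring. reflexivity. }
  assert (DL : forall N, enc N 6 = lamf N).
  { intros N. unfold enc. destruct (Rle_dec 6 (3/2)); [lra|]. destruct (Rle_dec 6 (7/2)); [lra|].
    destruct (Rle_dec 6 (11/2)); [lra|]. reflexivity. }
  exists (g 6), (fun t => g (t + 4)), (fun t => g (t + 2)), (fun t => g (t + 0)).
  split; [|split; [|split; [|split; [|split]]]].
  - apply (eq_from_eps _ _ (1 + Rabs p)). intros eps He.
    destruct (Hg [0 + 4; 6] eps 0%nat He) as [N [_ HP]].
    pose proof (HP (0 + 4) ltac:(simpl; auto)) as P1. pose proof (HP 6 ltac:(simpl; auto)) as P2.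
    rewrite DX in P1 by lra. rewrite DL in P2. rewrite kidx_0 in P1 by lia.
    unfold sX in P1. destruct (sch_0 F p q r (S N) (lamf N)) as [E0 _]. rewrite E0 in P1.
    replace (g (0 + 4) - g 6 * p) with (-(lamf N * p - g (0 + 4)) + (lamf N - g 6) * p) by ring.
    eapply Rle_trans; [apply Rabs_triang|]. rewrite Rabs_Ropp, Rabs_mult.
    assert (Rabs (lamf N - g 6) * Rabs p <= eps * Rabs p) by (apply Rmult_le_compat_r; lra). lra.
  - apply (eq_from_eps _ _ (1 + Rabs q)). intros eps He.
    destruct (Hg [0 + 2; 6] eps 0%nat He) as [N [_ HP]].
    pose proof (HP (0 + 2) ltac:(simpl; auto)) as P1. pose proof (HP 6 ltac:(simpl; auto)) as P2.
    rewrite DY in P1 by lra. rewrite DL in P2. rewrite kidx_0 in P1 by lia.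
    unfold sY in P1. destruct (sch_0 F p q r (S N) (lamf N)) as [_ [E0 _]]. rewrite E0 in P1.
    replace (g (0 + 2) - g 6 * q) with (-(lamf N * q - g (0 + 2)) + (lamf N - g 6) * q) by ring.
    eapply Rle_trans; [apply Rabs_triang|]. rewrite Rabs_Ropp, Rabs_mult.
    assert (Rabs (lamf N - g 6) * Rabs q <= eps * Rabs q) by (apply Rmult_le_compat_r; lra). lra.
  - apply (eq_from_eps _ _ (1 + Rabs r)). intros eps He.
    destruct (Hg [0 + 0; 6] eps 0%nat He) as [N [_ HP]].
    pose proof (HP (0 + 0) ltac:(simpl; auto)) as P1. pose proof (HP 6 ltac:(simpl; auto)) as P2.
    rewrite DZ in P1 by lra. rewrite DL in P2. rewrite kidx_0 in P1 by lia.
    unfold sZ in P1. destruct (sch_0 F p q r (S N) (lamf N)) as [_ [_ E0]]. rewrite E0 in P1.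
    replace (g (0 + 0) - g 6 * r) with (-(lamf N * r - g (0 + 0)) + (lamf N - g 6) * r) by ring.
    eapply Rle_trans; [apply Rabs_triang|]. rewrite Rabs_Ropp, Rabs_mult.
    assert (Rabs (lamf N - g 6) * Rabs r <= eps * Rabs r) by (apply Rmult_le_compat_r; lra). lra.
  - apply (eq_from_eps _ _ (Rabs a3 + Rabs b3 + Rabs c3)). intros eps He.
    destruct (Hg [1 + 4; 1 + 2; 1 + 0] eps 0%nat He) as [N [_ HP]].
    pose proof (HP (1 + 4) ltac:(simpl; auto)) as P1. pose proof (HP (1 + 2) ltac:(simpl; auto)) as P2.
    pose proof (HP (1 + 0) ltac:(simpl; auto)) as P3.
    rewrite DX in P1 by lra. rewrite DY in P2 by lra. rewrite DZ in P3 by lra.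
    rewrite kidx_1 in P1, P2, P3 by lia.
    destruct (Hlamf N) as [_ Hg0]. unfold gsh in Hg0.
    unfold sX, sY, sZ in P1, P2, P3.
    replace (a3 * g (1 + 4) + b3 * g (1 + 2) + c3 * g (1 + 0) - 0) with
      (- (a3 * (SX F p q r (S N) (lamf N) (S N) - g (1 + 4)) + b3 * (SY F p q r (S N) (lamf N) (S N) - g (1 + 2))
         + c3 * (SZ F p q r (S N) (lamf N) (S N) - g (1 + 0)))) by lra.
    rewrite Rabs_Ropp. eapply Rle_trans; [apply abs3|]. rewrite !Rabs_mult.
    pose proof (Rabs_pos a3); pose proof (Rabs_pos b3); pose proof (Rabs_pos c3).
    assert (Rabs a3 * Rabs (SX F p q r (S N) (lamf N) (S N) - g (1 + 4)) <= Rabs a3 * eps) by (apply Rmult_le_compat_l; lra).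
    assert (Rabs b3 * Rabs (SY F p q r (S N) (lamf N) (S N) - g (1 + 2)) <= Rabs b3 * eps) by (apply Rmult_le_compat_l; lra).
    assert (Rabs c3 * Rabs (SZ F p q r (S N) (lamf N) (S N) - g (1 + 0)) <= Rabs c3 * eps) by (apply Rmult_le_compat_l; lra).
    lra.
  - exists (M + (BZ + M) + (BY + (BZ + M))). intros s t Hs Ht.
    assert (LZ := lip_gen g enc sZ sP (fun _ => 0) 0 M 0 Happ DZ HiZ ltac:(intros; lra) HM
       ltac:(intros; apply HbP) s t Hs Ht).
    assert (LY := lip_gen g enc sY sZ (fun N => / INR (S N) * M) 2 BZ M Happ DY HiY
       ltac:(intros N; destruct (Hh' N); split; nra) HBZ ltac:(intros N i Hi; apply Hb; lia) s t Hs Ht).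
    assert (LX := lip_gen g enc sX sY (fun N => / INR (S N) * (BZ + M)) 4 BY (BZ + M) Happ DX HiX
       ltac:(intros N; destruct (Hh' N); split; nra) HBY ltac:(intros N i Hi; apply Hb; lia) s t Hs Ht).
    pose proof (Rabs_pos (t - s)).
    split; [|split]; eapply Rle_trans; try eassumption; apply Rmult_le_compat_r; lra.
  - intros x Hx.
    assert (Hx01 : 0 <= x <= 1) by lra.
    assert (HlY' : forall N i j, (i <= S N)%nat -> (j <= S N)%nat ->
       Rabs (sY N i - sY N j) <= (BZ + M) * Rabs (INR i / INR (S N) - INR j / INR (S N))).
    { intros N i j Hi Hj. eapply Rle_trans. apply HlY; auto. apply Rmult_le_compat_r. apply Rabs_pos.
      destruct (Hh' N). nra. }
    assert (HlX' : forall N i j, (i <= S N)%nat -> (j <= S N)%nat ->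
       Rabs (sX N i - sX N j) <= (BY + (BZ + M)) * Rabs (INR i / INR (S N) - INR j / INR (S N))).
    { intros N i j Hi Hj. eapply Rle_trans. apply HlX; auto. apply Rmult_le_compat_r. apply Rabs_pos.
      destruct (Hh' N). assert (/ INR (S N) * (BZ + M) <= BZ + M) by nra. lra. }
    assert (HlZ' : forall N i j, (i <= S N)%nat -> (j <= S N)%nat ->
       Rabs (sZ N i - sZ N j) <= M * Rabs (INR i / INR (S N) - INR j / INR (S N))).
    { intros N i j Hi Hj. rewrite <- (Rplus_0_r M). apply HlZ; auto. }
    split; [|split].
    + apply (deriv_gen g enc sX sY (fun N => / INR (S N) * (BZ + M)) 4 x (g (x + 2)) Hx Happ DX HiX).
      * intros N; destruct (Hh' N); nra.
      * apply Ef_small; lra.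
      * intros w Hw. set (Lc := BY + (BZ + M)). assert (HLc : 0 <= Lc) by (unfold Lc; lra).
        exists (w / (4 * (Lc + 1))), (w / 4), (w / (4 * (Lc + 1))), [x + 2].
        assert (Hd : 0 < w / (4 * (Lc + 1))) by (apply Rdiv_lt_0_compat; lra).
        split; [auto|split; [lra|split; [auto|]]].
        intros h' N Hh1 Hh2 Hpts i Hi Hti.
        assert (P := Hpts (x + 2) ltac:(simpl; auto)). rewrite DY in P by lra.
        eapply Rle_trans. apply (bcond_lin (sY N) (S N) x (g (x + 2)) (BZ + M) (w / (4 * (Lc + 1))) h' (w/4)); auto; try lia; try lra.
        assert (H3 : 3 * (BZ + M) * (w / (4 * (Lc + 1))) <= 3 * w / 4).
        { replace (3 * (BZ + M) * (w / (4 * (Lc + 1)))) with (3 * w / 4 * ((BZ + M) / (Lc + 1))) by (field; lra).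
          assert ((BZ + M) / (Lc + 1) <= 1).
          { apply (Rmult_le_reg_r (Lc + 1)); [lra|]. unfold Rdiv. rewrite Rmult_assoc, Rinv_l by lra. unfold Lc; lra. }
          assert (0 <= (BZ + M) / (Lc + 1)) by (apply Rdiv_le_0_compat; lra). nra. }
        lra.
    + apply (deriv_gen g enc sY sZ (fun N => / INR (S N) * M) 2 x (g (x + 0)) Hx Happ DY HiY).
      * intros N; destruct (Hh' N); nra.
      * apply Ef_small; lra.
      * intros w Hw. set (Lc := M).
        exists (w / (4 * (Lc + 1))), (w / 4), (w / (4 * (Lc + 1))), [x + 0].
        assert (Hd : 0 < w / (4 * (Lc + 1))) by (apply Rdiv_lt_0_compat; unfold Lc; lra).
        split; [auto|split; [lra|split; [auto|]]].
        intros h' N Hh1 Hh2 Hpts i Hi Hti.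
        assert (P := Hpts (x + 0) ltac:(simpl; auto)). rewrite DZ in P by lra.
        eapply Rle_trans. apply (bcond_lin (sZ N) (S N) x (g (x + 0)) M (w / (4 * (Lc + 1))) h' (w/4)); auto; try lia; try lra.
        assert (H3 : 3 * M * (w / (4 * (Lc + 1))) <= 3 * w / 4).
        { replace (3 * M * (w / (4 * (Lc + 1)))) with (3 * w / 4 * (M / (Lc + 1))) by (field; unfold Lc; lra).
          assert (M / (Lc + 1) <= 1).
          { apply (Rmult_le_reg_r (Lc + 1)); [unfold Lc; lra|]. unfold Rdiv. rewrite Rmult_assoc, Rinv_l by (unfold Lc; lra). unfold Lc; lra. }
          assert (0 <= M / (Lc + 1)) by (apply Rdiv_le_0_compat; unfold Lc; lra). nra. }
        lra.
    + apply (deriv_gen g enc sZ sP (fun _ => 0) 0 x (F x (g (x + 4)) (g (x + 2)) (g (x + 0))) Hx Happ DZ HiZ).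
      * intros; lra.
      * intros rho Hrho; exists 0%nat; intros; lra.
      * intros w Hw. destruct (Fc x (g (x + 4)) (g (x + 2)) (g (x + 0)) w Hw) as [dF [HdF HF]].
        set (Lt := 1 + M + (BZ + M) + (BY + (BZ + M))). assert (HLt : 1 <= Lt) by (unfold Lt; lra).
        set (del := dF / (8 * Lt)).
        assert (Hd : 0 < del) by (apply Rdiv_lt_0_compat; lra).
        assert (Hdd : del * Lt = dF / 8) by (unfold del; field; lra).
        exists del, (dF / 8), del, [x + 4; x + 2; x + 0].
        split; [auto|split; [lra|split; [auto|]]].
        intros h' N Hh1 Hh2 Hpts i Hi Hti.
        assert (P1 := Hpts (x + 4) ltac:(simpl; auto)). rewrite DX in P1 by lra.
        assert (P2 := Hpts (x + 2) ltac:(simpl; auto)). rewrite DY in P2 by lra.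
        assert (P3 := Hpts (x + 0) ltac:(simpl; auto)). rewrite DZ in P3 by lra.
        assert (B1 := bcond_lin (sX N) (S N) x (g (x + 4)) (BY + (BZ + M)) del h' (dF / 8) ltac:(lia) Hx01 ltac:(lra)
           (HlX' N) P1 Hh1 Hh2 i Hi Hti).
        assert (B2 := bcond_lin (sY N) (S N) x (g (x + 2)) (BZ + M) del h' (dF / 8) ltac:(lia) Hx01 ltac:(lra)
           (HlY' N) P2 Hh1 Hh2 i Hi Hti).
        assert (B3 := bcond_lin (sZ N) (S N) x (g (x + 0)) M del h' (dF / 8) ltac:(lia) Hx01 ltac:(lra)
           (HlZ' N) P3 Hh1 Hh2 i Hi Hti).
        assert (Hl1 : (BY + (BZ + M)) * del <= dF / 8) by (rewrite <- Hdd; rewrite (Rmult_comm del); apply Rmult_le_compat_r; [lra| unfold Lt; lra]).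
        assert (Hl2 : (BZ + M) * del <= dF / 8) by (rewrite <- Hdd; rewrite (Rmult_comm del); apply Rmult_le_compat_r; [lra| unfold Lt; lra]).
        assert (Hl3 : M * del <= dF / 8) by (rewrite <- Hdd; rewrite (Rmult_comm del); apply Rmult_le_compat_r; [lra| unfold Lt; lra]).
        assert (Hl4 : del <= dF / 8) by (rewrite <- Hdd; nra).
        unfold sX in B1; unfold sY in B2; unfold sZ in B3; cbv beta in B1, B2, B3. left. unfold sP, Sphi. apply HF; lra.
Qed.


Definition ctn_at (a b : R) (g : R -> R) (x : R) := forall eps, 0 < eps -> exists del, 0 < del /\
  forall y, a <= y <= b -> Rabs (y - x) < del -> Rabs (g y - g x) < eps.
Definition ctn (a b : R) (g : R -> R) := forall x, a <= x <= b -> ctn_at a b g x.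

Lemma cont01_ctn g : cont_on01 g -> ctn 0 1 g.
Proof.
  intros H x Hx eps He. specialize (H x Hx).
  apply filterlim_locally with (eps := mkposreal eps He) in H.
  destruct H as [[d Hd] H]. exists d. split; auto.
  intros y Hy Hyx. apply (H y); auto.
Qed.

Lemma ctn_cont01 g : ctn 0 1 g -> cont_on01 g.
Proof.
  intros H x Hx. apply filterlim_locally. intros [eps He].
  destruct (H x Hx eps He) as [d [Hd H1]].
  exists (mkposreal d Hd). intros y Hyx Hy. apply H1; auto.
Qed.

Lemma ctn_at_cont a b g x : a < x < b -> ctn_at a b g x -> continuous g x.
Proof.
  intros Hx H. apply filterlim_locally. intros [eps He].
  destruct (H eps He) as [d [Hd H1]].
  exists (mkposreal (Rmin d (Rmin (x - a) (b - x))) ltac:(apply Rmin_glb_lt; auto; apply Rmin_glb_lt; lra)).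
  intros y Hy. simpl in Hy. change (Rabs (y - x) < Rmin d (Rmin (x - a) (b - x))) in Hy.
  assert (Hm1 := Rmin_l d (Rmin (x - a) (b - x))). assert (Hm2 := Rmin_r d (Rmin (x - a) (b - x))).
  assert (Hm3 := Rmin_l (x - a) (b - x)). assert (Hm4 := Rmin_r (x - a) (b - x)).
  apply Rabs_def2 in Hy as Hy'.
  apply H1. lra. apply Rabs_def1; lra.
Qed.

Definition clampab (a b x : R) := Rmax a (Rmin b x).

Lemma clampab_in a b x : a <= b -> a <= clampab a b x <= b.
Proof. intros H. unfold clampab. split. apply Rmax_l. apply Rmax_lub; auto. apply Rmin_l. Qed.

Lemma clampab_id a b x : a <= x <= b -> clampab a b x = x.
Proof. intros H. unfold clampab. rewrite Rmin_right by lra. rewrite Rmax_right by lra. auto. Qed.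

Lemma clampab_lip a b x y : a <= b -> Rabs (clampab a b x - clampab a b y) <= Rabs (x - y).
Proof.
  intros H. unfold clampab.
  destruct (Rle_dec b x); destruct (Rle_dec b y);
  [rewrite (Rmin_left b x), (Rmin_left b y) by lra | rewrite (Rmin_left b x), (Rmin_right b y) by lra
  | rewrite (Rmin_right b x), (Rmin_left b y) by lra | rewrite (Rmin_right b x), (Rmin_right b y) by lra];
  unfold Rmax; repeat destruct Rle_dec; apply Rabs_le_between; split;
  (destruct (Rle_dec 0 (x - y)); [rewrite (Rabs_pos_eq (x - y)) by lra | rewrite (Rabs_left (x - y)) by lra]); lra.
Qed.

Lemma ctn_exRInt a b g : a <= b -> ctn a b g -> ex_RInt g a b.
Proof.
  intros Hab H.
  apply (ex_RInt_ext (fun x => g (clampab a b x))).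
  { intros x Hx. rewrite Rmin_left in Hx by lra. rewrite Rmax_right in Hx by lra. rewrite clampab_id; lra. }
  apply (ex_RInt_continuous (V := R_CompleteNormedModule)). intros z _.
  apply filterlim_locally. intros [eps He].
  destruct (H (clampab a b z) (clampab_in a b z Hab) eps He) as [d [Hd H1]].
  exists (mkposreal d Hd). intros y Hy. change (Rabs (g (clampab a b y) - g (clampab a b z)) < eps).
  apply H1. apply clampab_in; auto.
  eapply Rle_lt_trans. apply clampab_lip; auto. apply Hy.
Qed.

Lemma ctn_at_mult a b g h x : ctn_at a b g x -> ctn_at a b h x -> ctn_at a b (fun y => g y * h y) x.
Proof.
  intros Hg Hh eps He.
  set (K := Rabs (g x) + Rabs (h x) + 1).
  assert (HK : 0 < K) by (unfold K; pose proof (Rabs_pos (g x)); pose proof (Rabs_pos (h x)); lra).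
  set (e := Rmin 1 (eps / (4 * K))).
  assert (He0 : 0 < e) by (apply Rmin_glb_lt; [lra|apply Rdiv_lt_0_compat; lra]).
  destruct (Hg e He0) as [d1 [Hd1 H1]]. destruct (Hh e He0) as [d2 [Hd2 H2]].
  exists (Rmin d1 d2). split. apply Rmin_glb_lt; auto.
  intros y Hy Hyx.
  assert (A1 := H1 y Hy ltac:(eapply Rlt_le_trans; [apply Hyx|apply Rmin_l])).
  assert (A2 := H2 y Hy ltac:(eapply Rlt_le_trans; [apply Hyx|apply Rmin_r])).
  assert (Ee1 := Rmin_l 1 (eps / (4 * K))). assert (Ee2 := Rmin_r 1 (eps / (4 * K))). fold e in Ee1, Ee2.
  replace (g y * h y - g x * h x) with ((g y - g x) * h y + g x * (h y - h x)) by ring.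
  eapply Rle_lt_trans; [apply Rabs_triang|]. rewrite !Rabs_mult.
  assert (Hhy : Rabs (h y) <= Rabs (h x) + 1).
  { replace (h y) with ((h y - h x) + h x) by ring. eapply Rle_trans; [apply Rabs_triang|]. lra. }
  assert (T1 : Rabs (g y - g x) * Rabs (h y) <= e * K).
  { apply Rmult_le_compat; try apply Rabs_pos; try lra. unfold K. pose proof (Rabs_pos (g x)). lra. }
  assert (T2 : Rabs (g x) * Rabs (h y - h x) <= K * e).
  { apply Rmult_le_compat; try apply Rabs_pos; try lra. unfold K. pose proof (Rabs_pos (h x)). lra. }
  assert (T3 : e * K <= eps / 4).
  { apply (Rle_trans _ (eps / (4 * K) * K)). apply Rmult_le_compat_r; lra.
    right. field. lra. }
  lra.
Qed.

Lemma ctn_at_abs a b g x : ctn_at a b g x -> ctn_at a b (fun y => Rabs (g y)) x.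
Proof.
  intros H eps He. destruct (H eps He) as [d [Hd H1]]. exists d; split; auto.
  intros y Hy Hyx. eapply Rle_lt_trans; [apply Rabs_triang_inv2|]. apply H1; auto.
Qed.

Lemma ctn_at_plus a b g h x : ctn_at a b g x -> ctn_at a b h x -> ctn_at a b (fun y => g y + h y) x.
Proof.
  intros Hg Hh eps He. destruct (Hg (eps/2)) as [d1 [Hd1 H1]]; [lra|]. destruct (Hh (eps/2)) as [d2 [Hd2 H2]]; [lra|].
  exists (Rmin d1 d2). split. apply Rmin_glb_lt; auto. intros y Hy Hyx.
  assert (A1 := H1 y Hy ltac:(eapply Rlt_le_trans; [apply Hyx|apply Rmin_l])).
  assert (A2 := H2 y Hy ltac:(eapply Rlt_le_trans; [apply Hyx|apply Rmin_r])).
  replace (g y + h y - (g x + h x)) with ((g y - g x) + (h y - h x)) by ring.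
  eapply Rle_lt_trans; [apply Rabs_triang|]. lra.
Qed.

Lemma ctn_at_const a b c x : ctn_at a b (fun _ => c) x.
Proof. intros eps He. exists 1. split; [lra|]. intros. replace (c - c) with 0 by ring. rewrite Rabs_R0; lra. Qed.

Lemma ctn_at_ext a b g h x : a <= x <= b -> (forall y, a <= y <= b -> g y = h y) -> ctn_at a b g x -> ctn_at a b h x.
Proof.
  intros Hx Hgh H eps He. destruct (H eps He) as [d [Hd H1]]. exists d; split; auto.
  intros y Hy Hyx. rewrite <- !Hgh; auto.
Qed.

Lemma ctn_at_sub a b c d g x : a <= c -> d <= b -> ctn_at a b g x -> ctn_at c d g x.
Proof.
  intros Hac Hdb H eps He. destruct (H eps He) as [del [Hd H1]]. exists del; split; auto.
  intros y Hy Hyx. apply H1; auto; lra.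
Qed.

Lemma ctn_point a g : ctn a a g.
Proof.
  intros x Hx eps He. exists 1. split; [lra|]. intros y Hy _. replace y with x by lra.
  replace (g x - g x) with 0 by ring. rewrite Rabs_R0; lra.
Qed.

Lemma ctn_mult a b g h : ctn a b g -> ctn a b h -> ctn a b (fun y => g y * h y).
Proof. intros Hg Hh x Hx. apply ctn_at_mult; auto. Qed.
Lemma ctn_abs a b g : ctn a b g -> ctn a b (fun y => Rabs (g y)).
Proof. intros Hg x Hx. apply ctn_at_abs; auto. Qed.
Lemma ctn_sub a b c d g : a <= c -> d <= b -> ctn a b g -> ctn c d g.
Proof. intros H1 H2 H x Hx. apply (ctn_at_sub a b); auto. apply H. lra. Qed.

Lemma ctn_eq_at a b f g x : a < b -> a <= x <= b -> ctn_at a b f x -> ctn_at a b g x ->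
  (forall y, a < y < b -> f y = g y) -> f x = g x.
Proof.
  intros Hab Hx Hf Hg Heq.
  destruct (Req_dec (f x) (g x)) as [E|Hne]; auto. exfalso.
  set (e := Rabs (f x - g x) / 2).
  assert (He : 0 < e) by (unfold e; apply Rdiv_lt_0_compat; [apply Rabs_pos_lt; lra| lra]).
  destruct (Hf e He) as [d1 [Hd1 H1]]. destruct (Hg e He) as [d2 [Hd2 H2]].
  set (d := Rmin (Rmin d1 d2) ((b - a) / 2)).
  assert (Hd : 0 < d) by (apply Rmin_glb_lt; [apply Rmin_glb_lt; auto| lra]).
  assert (Hm1 := Rmin_l (Rmin d1 d2) ((b - a) / 2)). assert (Hm2 := Rmin_r (Rmin d1 d2) ((b - a) / 2)).
  assert (Hm3 := Rmin_l d1 d2). assert (Hm4 := Rmin_r d1 d2). fold d in Hm1, Hm2.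
  set (y := if Rle_dec x ((a + b) / 2) then x + d / 2 else x - d / 2).
  assert (Hy : a < y < b /\ Rabs (y - x) < d).
  { unfold y. destruct (Rle_dec x ((a + b) / 2)).
    - split. lra. replace (x + d / 2 - x) with (d / 2) by ring. rewrite Rabs_pos_eq; lra.
    - split. lra. replace (x - d / 2 - x) with (- (d / 2)) by ring. rewrite Rabs_Ropp, Rabs_pos_eq; lra. }
  destruct Hy as [Hy1 Hy2].
  assert (A1 := H1 y ltac:(lra) ltac:(lra)). assert (A2 := H2 y ltac:(lra) ltac:(lra)).
  rewrite Heq in A1 by auto.
  assert (Rabs (f x - g x) <= Rabs (g y - f x) + Rabs (g y - g x)).
  { replace (f x - g x) with (- (g y - f x) + (g y - g x)) by ring.
    eapply Rle_trans; [apply Rabs_triang|]. rewrite Rabs_Ropp. lra. }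
  unfold e in *. lra.
Qed.


Lemma joint_ed (H : R -> R -> R) (D : R * R -> Prop) (p1 p2 : R) :
  filterlim (fun q : R * R => H (fst q) (snd q)) (within D (locally (p1, p2))) (locally (H p1 p2)) ->
  forall eps, 0 < eps -> exists del, 0 < del /\ forall t s, D (t, s) -> Rabs (t - p1) < del -> Rabs (s - p2) < del ->
    Rabs (H t s - H p1 p2) < eps.
Proof.
  intros Hf eps He. apply filterlim_locally with (eps := mkposreal eps He) in Hf.
  destruct Hf as [[d Hd] Hf]. exists d. split; auto.
  intros t s HD H1 H2. apply (Hf (t, s)); auto. split; auto.
Qed.

Lemma ctn_at_zero a b g x : (exists d, 0 < d /\ forall y, a <= y <= b -> Rabs (y - x) < d -> g y = 0) ->
  a <= x <= b -> ctn_at a b g x.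
Proof.
  intros [d [Hd H]] Hx eps He. exists d. split; auto. intros y Hy Hyx.
  rewrite (H y Hy Hyx), (H x Hx). replace (0 - 0) with 0 by ring. rewrite Rabs_R0; lra.
  rewrite Rminus_eq_0, Rabs_R0; auto.
Qed.

Lemma rint_approx (k phi : R -> R) c eps : ctn 0 1 (fun s => k s * phi s) -> ctn 0 1 phi ->
  (forall s, 0 <= s <= 1 -> Rabs (k s * phi s - c * phi s) <= eps * phi s) ->
  Rabs (RInt (fun s => k s * phi s) 0 1 - c * RInt phi 0 1) <= eps * RInt phi 0 1.
Proof.
  intros Hk Hp Hb.
  assert (E1 : ex_RInt (fun s => k s * phi s) 0 1) by (apply ctn_exRInt; auto; lra).
  assert (E2 : ex_RInt phi 0 1) by (apply ctn_exRInt; auto; lra).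
  assert (E3 : ex_RInt (fun s => c * phi s) 0 1) by (apply (ex_RInt_scal (V := R_NormedModule)); auto).
  assert (Hc : ctn 0 1 (fun s => k s * phi s - c * phi s)).
  { intros x Hx. apply (ctn_at_ext 0 1 (fun s => k s * phi s + (fun _ : R => - c) s * phi s)); auto.
    intros; cbv beta; ring.
    apply (ctn_at_plus 0 1 (fun s => k s * phi s) (fun s => (fun _ : R => - c) s * phi s)). apply Hk; auto.
    apply (ctn_at_mult 0 1 (fun _ => - c) phi). apply ctn_at_const. apply Hp; auto. }
  assert (E4 : ex_RInt (fun s => k s * phi s - c * phi s) 0 1) by (apply ctn_exRInt; auto; lra).
  assert (E5 : ex_RInt (fun s => Rabs (k s * phi s - c * phi s)) 0 1) by (apply ctn_exRInt; [lra|apply ctn_abs; auto]).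
  assert (E6 : ex_RInt (fun s => eps * phi s) 0 1) by (apply (ex_RInt_scal (V := R_NormedModule)); auto).
  assert (Eq : RInt (fun s => k s * phi s - c * phi s) 0 1 = RInt (fun s => k s * phi s) 0 1 - c * RInt phi 0 1).
  { rewrite (RInt_minus (V := R_CompleteNormedModule) (fun s => k s * phi s) (fun s => c * phi s)); auto.
    assert (Es : RInt (fun s => c * phi s) 0 1 = c * RInt phi 0 1) by exact (RInt_scal (V := R_CompleteNormedModule) phi 0 1 c E2).
    rewrite Es. reflexivity. }
  rewrite <- Eq.
  eapply Rle_trans. apply abs_RInt_le; auto; lra.
  assert (Es : RInt (fun s => eps * phi s) 0 1 = eps * RInt phi 0 1) by exact (RInt_scal (V := R_CompleteNormedModule) phi 0 1 eps E2).
  rewrite <- Es.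
  apply RInt_le; auto; try lra. intros x Hx. apply Hb. lra.
Qed.

Lemma rint_lower (phi : R -> R) a b m : 0 <= a -> a <= b -> b <= 1 -> ctn 0 1 phi ->
  (forall s, 0 <= s <= 1 -> 0 <= phi s) -> (forall s, a <= s <= b -> m <= phi s) ->
  m * (b - a) <= RInt phi 0 1.
Proof.
  intros H0a Hab Hb1 Hp Hpos Hm.
  assert (Ex : forall c d, 0 <= c -> c <= d -> d <= 1 -> ex_RInt phi c d).
  { intros c d H1 H2 H3. apply ctn_exRInt; auto. apply (ctn_sub 0 1); auto. }
  rewrite <- (RInt_Chasles (V := R_CompleteNormedModule) phi 0 a 1); auto; try (apply Ex; lra).
  rewrite <- (RInt_Chasles (V := R_CompleteNormedModule) phi a b 1); auto; try (apply Ex; lra).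
  change (plus (RInt phi 0 a) (plus (RInt phi a b) (RInt phi b 1))) with
    (RInt phi 0 a + (RInt phi a b + RInt phi b 1)).
  assert (0 <= RInt phi 0 a) by (apply RInt_ge_0; auto; [apply Ex; lra| intros; apply Hpos; lra]).
  assert (0 <= RInt phi b 1) by (apply RInt_ge_0; auto; [apply Ex; lra| intros; apply Hpos; lra]).
  assert (RInt (fun _ => m) a b <= RInt phi a b).
  { apply RInt_le; [lra | apply ex_RInt_const | apply Ex; lra | intros; apply Hm; lra]. }
  rewrite RInt_const in H1. change (scal (b - a) m) with ((b - a) * m) in H1. lra.
Qed.


Section Green.
Variables (a1 b1 c1 a2 b2 c2 a3 b3 c3 : R) (G G1 G2 : R -> R -> R).
Hypothesis HG : is_green_function a1 b1 c1 a2 b2 c2 a3 b3 c3 G G1 G2.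

Lemma G_ctn t : 0 <= t <= 1 -> ctn 0 1 (G t).
Proof.
  intros Ht x Hx eps He. destruct HG as [HGc _].
  destruct (joint_ed G Sq01 t x (HGc (t, x) (conj Ht Hx)) eps He) as [d [Hd H]].
  exists d. split; auto. intros y Hy Hyx. apply H; auto. split; auto.
  simpl. rewrite Rminus_eq_0, Rabs_R0; auto.
Qed.

Lemma G1_ctn t : 0 <= t <= 1 -> ctn 0 1 (G1 t).
Proof.
  intros Ht x Hx eps He. destruct HG as [_ [HGc _]].
  destruct (joint_ed G1 Sq01 t x (HGc (t, x) (conj Ht Hx)) eps He) as [d [Hd H]].
  exists d. split; auto. intros y Hy Hyx. apply H; auto. split; auto.
  simpl. rewrite Rminus_eq_0, Rabs_R0; auto.
Qed.

Lemma G2_ed t x : 0 <= t <= 1 -> 0 <= x <= 1 -> t <> x -> forall eps, 0 < eps -> exists del, 0 < del /\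
  forall t' s, 0 <= t' <= 1 -> 0 <= s <= 1 -> t' <> s -> Rabs (t' - t) < del -> Rabs (s - x) < del ->
  Rabs (G2 t' s - G2 t x) < eps.
Proof.
  intros Ht Hx Htx eps He. destruct HG as [_ [_ [HGc _]]].
  destruct (joint_ed G2 (fun q => Sq01 q /\ fst q <> snd q) t x (HGc (t, x) (conj Ht Hx) Htx) eps He) as [d [Hd H]].
  exists d. split; auto. intros t' s Ht' Hs Hts H1 H2. apply H; auto. split; auto. split; auto.
Qed.

Lemma G2_ctn_off t x : 0 <= t <= 1 -> 0 <= x <= 1 -> t <> x -> ctn_at 0 1 (G2 t) x.
Proof.
  intros Ht Hx Htx eps He. destruct (G2_ed t x Ht Hx Htx eps He) as [d [Hd H]].
  set (d' := Rmin d (Rabs (t - x))).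
  assert (Hd' : 0 < d') by (apply Rmin_glb_lt; auto; apply Rabs_pos_lt; lra).
  exists d'. split; auto. intros y Hy Hyx. apply H; auto.
  - intros E. subst y. assert (Hm := Rmin_r d (Rabs (t - x))). fold d' in Hm. lra.
  - rewrite Rminus_eq_0, Rabs_R0; auto.
  - eapply Rlt_le_trans; [apply Hyx|apply Rmin_l].
Qed.

Lemma hex_deriv2 phi : cont_on01 phi -> forall t, 0 < t < 1 ->
  is_derive (fun t => RInt (fun s => G2 t s * phi s) 0 1) t (phi t).
Proof.
  intros Hp t Ht. destruct HG as [_ [_ [_ [_ [_ Hex]]]]].
  destruct (Hex phi Hp) as [[_ [_ [_ [Hd _]]]] _]. apply (Hd t Ht).
Qed.

Lemma G2_const t1 t2 s0 : 0 < t1 -> t1 < t2 -> t2 < 1 -> 0 <= s0 <= 1 -> (s0 < t1 \/ t2 < s0) ->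
  G2 t1 s0 = G2 t2 s0.
Proof.
  intros H1 H12 H2 Hs0 Hout.
  set (dd := Rmax (t1 - s0) (s0 - t2)).
  assert (Hdd : 0 < dd) by (unfold dd; destruct Hout; [eapply Rlt_le_trans; [|apply Rmax_l]| eapply Rlt_le_trans; [|apply Rmax_r]]; lra).
  assert (Hfar : forall y, t1 - dd / 2 <= y <= t2 + dd / 2 -> dd / 2 <= Rabs (y - s0)).
  { intros y Hy. unfold dd in *. destruct Hout.
    - rewrite Rmax_left in * by lra. rewrite Rabs_pos_eq; lra.
    - rewrite Rmax_right in * by lra. rewrite Rabs_left; lra. }
  apply (eq_from_eps _ _ 2). intros eps He.
  destruct (G2_ed t1 s0 ltac:(lra) Hs0 ltac:(lra) eps He) as [d1 [Hd1 HD1]].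
  destruct (G2_ed t2 s0 ltac:(lra) Hs0 ltac:(lra) eps He) as [d2 [Hd2 HD2]].
  set (del := Rmin (Rmin d1 d2) (Rmin (dd / 2) (1 / 2))).
  assert (Hdel : 0 < del) by (apply Rmin_glb_lt; apply Rmin_glb_lt; lra).
  assert (Hm1 : del <= d1) by (unfold del; eapply Rle_trans; [apply Rmin_l| apply Rmin_l]).
  assert (Hm2 : del <= d2) by (unfold del; eapply Rle_trans; [apply Rmin_l| apply Rmin_r]).
  assert (Hm3 : del <= dd / 2) by (unfold del; eapply Rle_trans; [apply Rmin_r| apply Rmin_l]).
  assert (Hm4 : del <= 1 / 2) by (unfold del; eapply Rle_trans; [apply Rmin_r| apply Rmin_r]).
  set (phi := fun s => Rmax 0 (del - Rabs (s - s0))).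
  assert (Hp0 : forall s, 0 <= phi s) by (intros; apply Rmax_l).
  assert (Hpz : forall s, del <= Rabs (s - s0) -> phi s = 0) by (intros; unfold phi; apply Rmax_left; lra).
  assert (Hpp : forall s, 0 < phi s -> Rabs (s - s0) < del).
  { intros s Hs. destruct (Rlt_dec (Rabs (s - s0)) del); auto. rewrite Hpz in Hs; lra. }
  assert (Hplip : forall x y, Rabs (phi y - phi x) <= Rabs (y - x)).
  { intros x y. unfold phi. unfold Rmax. destruct (Rle_dec 0 (del - Rabs (y - s0))); destruct (Rle_dec 0 (del - Rabs (x - s0)));
    pose proof (Rabs_triang_inv (y - s0) (x - s0)); pose proof (Rabs_triang_inv (x - s0) (y - s0));
    replace (y - s0 - (x - s0)) with (y - x) in * by ring; replace (x - s0 - (y - s0)) with (- (y - x)) in * by ring;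
    rewrite ?Rabs_Ropp in *; pose proof (Rabs_pos (y - x));
    apply Rabs_le_between; split; lra. }
  assert (Hpc : ctn 0 1 phi).
  { intros x Hx e He'. exists e. split; auto. intros y Hy Hyx. eapply Rle_lt_trans; [apply Hplip|auto]. }
  assert (Hpc01 : cont_on01 phi) by (apply ctn_cont01; auto).
  set (w2 := fun t => RInt (fun s => G2 t s * phi s) 0 1).
  assert (Hw2 : forall t, 0 < t < 1 -> is_derive w2 t (phi t)) by (apply hex_deriv2; auto).
  assert (Hweq : w2 t1 = w2 t2).
  { destruct (MVT_gen w2 t1 t2 phi) as [c [Hc Hc2]].
    - intros x Hx. rewrite Rmin_left, Rmax_right in Hx by lra. apply Hw2. lra.
    - intros x Hx. rewrite Rmin_left, Rmax_right in Hx by lra. apply continuity_pt_filterlim.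
      apply (ex_derive_continuous (K := R_AbsRing) (V := R_NormedModule)). eexists. apply Hw2. lra.
    - rewrite Rmin_left, Rmax_right in Hc by lra. rewrite Hpz in Hc2. lra.
      pose proof (Hfar c ltac:(lra)). lra. }
  assert (Happ : forall ti, t1 <= ti <= t2 ->
     (forall s, 0 <= s <= 1 -> ti <> s -> Rabs (s - s0) < del -> Rabs (G2 ti s - G2 ti s0) < eps) ->
     Rabs (w2 ti - G2 ti s0 * RInt phi 0 1) <= eps * RInt phi 0 1).
  { intros ti Hti HD. unfold w2.
    assert (Hz : forall y, 0 <= y <= 1 -> Rabs (y - ti) < dd / 2 -> phi y = 0).
    { intros y Hy Hyt. apply Hpz. apply Rabs_def2 in Hyt. pose proof (Hfar y ltac:(lra)). lra. }
    apply rint_approx; auto.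
    - intros x Hx. destruct (Req_dec x ti) as [E|Hne].
      + subst x. apply ctn_at_zero; auto. exists (dd / 2). split; [lra|]. intros y Hy Hyt. rewrite Hz; auto; ring.
      + apply (ctn_at_mult 0 1 (G2 ti) phi). apply G2_ctn_off; auto; lra. apply Hpc; auto.
    - intros s Hs. destruct (Rle_lt_dec (phi s) 0) as [Hle|Hlt].
      + assert (phi s = 0) by (pose proof (Hp0 s); lra). rewrite H.
        replace (G2 ti s * 0 - G2 ti s0 * 0) with 0 by ring. rewrite Rabs_R0; lra.
      + replace (G2 ti s * phi s - G2 ti s0 * phi s) with ((G2 ti s - G2 ti s0) * phi s) by ring.
        rewrite Rabs_mult, (Rabs_pos_eq (phi s)) by lra. apply Rmult_le_compat_r; [lra|].
        assert (Hs0' := Hpp s Hlt).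
        assert (Hts : ti <> s).
        { intros E; subst s. pose proof (Hfar ti ltac:(lra)). lra. }
        left. apply HD; auto. }
  assert (A1 := Happ t1 ltac:(lra) ltac:(intros s Hs Hts Hss; apply HD1; auto; try lra; rewrite Rminus_eq_0, Rabs_R0; lra)).
  assert (A2 := Happ t2 ltac:(lra) ltac:(intros s Hs Hts Hss; apply HD2; auto; try lra; rewrite Rminus_eq_0, Rabs_R0; lra)).
  set (I := RInt phi 0 1) in *.
  assert (HI : del / 2 * (del / 2) <= I).
  { destruct (Rle_dec (1/2) s0).
    - replace (del / 2) with (s0 - (s0 - del / 2)) at 2 by ring.
      apply rint_lower; auto; try lra. intros s Hs. unfold phi. eapply Rle_trans; [|apply Rmax_r].
      rewrite Rabs_left1 by lra. lra.
    - replace (del / 2) with (s0 + del / 2 - s0) at 2 by ring.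
      apply rint_lower; auto; try lra. intros s Hs. unfold phi. eapply Rle_trans; [|apply Rmax_r].
      rewrite Rabs_pos_eq by lra. lra. }
  assert (HIp : 0 < I) by nra.
  rewrite Hweq in A1.
  assert (Rabs (G2 t1 s0 - G2 t2 s0) * I <= 2 * eps * I).
  { assert (Rabs ((G2 t1 s0 - G2 t2 s0) * I) <= 2 * eps * I).
    { replace ((G2 t1 s0 - G2 t2 s0) * I) with (- (w2 t2 - G2 t1 s0 * I) + (w2 t2 - G2 t2 s0 * I)) by ring.
      eapply Rle_trans; [apply Rabs_triang|]. rewrite Rabs_Ropp. lra. }
    rewrite Rabs_mult, (Rabs_pos_eq I) in H by lra. lra. }
  apply (Rmult_le_reg_r I); auto. lra.
Qed.


Lemma G2_left s0 t : 0 < s0 <= 1 -> 0 <= t < s0 -> G2 t s0 = G2 0 s0.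
Proof.
  intros Hs Ht. destruct (Req_dec t 0) as [->|Ht0]; auto.
  apply (eq_from_eps _ _ 1). intros eps He.
  destruct (G2_ed 0 s0 ltac:(lra) ltac:(lra) ltac:(lra) eps He) as [d [Hd H]].
  set (t' := Rmin (t / 2) (d / 2)).
  assert (Ht1 := Rmin_l (t / 2) (d / 2)). assert (Ht2 := Rmin_r (t / 2) (d / 2)). fold t' in Ht1, Ht2.
  assert (Ht3 : 0 < t') by (apply Rmin_glb_lt; lra).
  rewrite <- (G2_const t' t s0) by lra.
  left. rewrite Rmult_1_r. apply H; try lra. rewrite Rminus_0_r, Rabs_pos_eq; lra.
  rewrite Rminus_eq_0, Rabs_R0; lra.
Qed.

Lemma G2_right s0 t : 0 <= s0 < 1 -> s0 < t <= 1 -> G2 t s0 = G2 1 s0.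
Proof.
  intros Hs Ht. destruct (Req_dec t 1) as [->|Ht0]; auto.
  apply (eq_from_eps _ _ 1). intros eps He.
  destruct (G2_ed 1 s0 ltac:(lra) ltac:(lra) ltac:(lra) eps He) as [d [Hd H]].
  set (t' := Rmax ((t + 1) / 2) (1 - d / 2)).
  assert (Ht1 := Rmax_l ((t + 1) / 2) (1 - d / 2)). assert (Ht2 := Rmax_r ((t + 1) / 2) (1 - d / 2)). fold t' in Ht1, Ht2.
  assert (Ht3 : t' < 1) by (apply Rmax_lub_lt; lra).
  rewrite (G2_const t t' s0) by lra.
  left. rewrite Rmult_1_r. apply H; try lra. rewrite Rabs_left; lra.
  rewrite Rminus_eq_0, Rabs_R0; lra.
Qed.

Lemma ctn_at_ext_loc a b g h x d : 0 < d -> (forall y, a <= y <= b -> Rabs (y - x) < d -> g y = h y) ->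
  a <= x <= b -> ctn_at a b g x -> ctn_at a b h x.
Proof.
  intros Hd Heq Hx H eps He. destruct (H eps He) as [d' [Hd' H1]].
  exists (Rmin d d'). split. apply Rmin_glb_lt; auto. intros y Hy Hyx.
  rewrite <- (Heq y Hy), <- (Heq x Hx). apply H1; auto. eapply Rlt_le_trans; [apply Hyx|apply Rmin_r].
  rewrite Rminus_eq_0, Rabs_R0; auto. eapply Rlt_le_trans; [apply Hyx|apply Rmin_l].
Qed.

Lemma ctn_on_B c d : 0 <= c -> c <= d -> d < 1 -> ctn c d (G2 1).
Proof.
  intros H1 H2 H3 x Hx. apply (ctn_at_sub 0 1); try lra. apply G2_ctn_off; lra.
Qed.

Lemma ctn_on_A c d : 0 < c -> c <= d -> d <= 1 -> ctn c d (G2 0).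
Proof.
  intros H1 H2 H3 x Hx. apply (ctn_at_sub 0 1); try lra. apply G2_ctn_off; lra.
Qed.

Lemma RInt_equiv (f g : R -> R) a b : a <= b -> (forall x, a < x < b -> f x = g x) -> ex_RInt g a b ->
  ex_RInt f a b /\ RInt f a b = RInt g a b.
Proof.
  intros Hab H Hg. split.
  - apply (ex_RInt_ext g). intros x Hx. rewrite Rmin_left, Rmax_right in Hx by lra. symmetry; auto. auto.
  - apply RInt_ext. intros x Hx. rewrite Rmin_left, Rmax_right in Hx by lra. auto.
Qed.

Lemma G2_jump s : 0 < s < 1 -> G2 1 s - G2 0 s = 1.
Proof.
  intros Hs.
  set (A := G2 0). set (B := G2 1).
  set (phi := fun _ : R => 1).
  assert (Hpc : cont_on01 phi) by (apply ctn_cont01; intros x Hx; apply ctn_at_const).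
  set (w2 := fun t => RInt (fun s => G2 t s * phi s) 0 1).
  assert (Hw2 := hex_deriv2 phi Hpc s Hs). fold w2 in Hw2.
  assert (HexB : forall t, 0 <= t < 1 -> ex_RInt B 0 t) by (intros t Ht; apply ctn_exRInt; [lra| apply ctn_on_B; lra]).
  assert (HexA : forall t, 0 < t <= 1 -> ex_RInt A t 1) by (intros t Ht; apply ctn_exRInt; [lra| apply ctn_on_A; lra]).
  assert (Hrep : forall t, 0 < t < 1 -> w2 t = RInt B 0 t + RInt A t 1).
  { intros t Ht. unfold w2.
    destruct (RInt_equiv (fun s => G2 t s * phi s) B 0 t ltac:(lra)) as [E1 R1]; [|apply HexB; lra|].
    { intros x Hx. unfold phi, B. rewrite Rmult_1_r. apply G2_right; lra. }
    destruct (RInt_equiv (fun s => G2 t s * phi s) A t 1 ltac:(lra)) as [E2 R2]; [|apply HexA; lra|].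
    { intros x Hx. unfold phi, A. rewrite Rmult_1_r. apply G2_left; lra. }
    rewrite <- (RInt_Chasles (V := R_CompleteNormedModule) _ 0 t 1 E1 E2). rewrite R1, R2. reflexivity. }
  assert (HcB : continuous B s) by (apply (ctn_at_cont 0 1); [lra| apply G2_ctn_off; lra]).
  assert (HcA : continuous A s) by (apply (ctn_at_cont 0 1); [lra| apply G2_ctn_off; lra]).
  assert (D1 : is_derive (fun t => RInt B 0 t) s (B s)).
  { apply (is_derive_RInt B (fun t => RInt B 0 t) 0 s); auto.
    exists (mkposreal (Rmin s (1 - s)) ltac:(apply Rmin_glb_lt; lra)). intros y Hy.
    change (Rabs (y - s) < Rmin s (1 - s)) in Hy. apply Rabs_def2 in Hy.
    assert (Hm1 := Rmin_l s (1 - s)). assert (Hm2 := Rmin_r s (1 - s)).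
    apply (RInt_correct (V := R_CompleteNormedModule)). apply HexB. lra. }
  assert (D2 : is_derive (fun t => RInt A t 1) s (opp (A s))).
  { apply (is_derive_RInt' A (fun t => RInt A t 1) s 1); auto.
    exists (mkposreal (Rmin s (1 - s)) ltac:(apply Rmin_glb_lt; lra)). intros y Hy.
    change (Rabs (y - s) < Rmin s (1 - s)) in Hy. apply Rabs_def2 in Hy.
    assert (Hm1 := Rmin_l s (1 - s)). assert (Hm2 := Rmin_r s (1 - s)).
    apply (RInt_correct (V := R_CompleteNormedModule)). apply HexA. lra. }
  assert (D3 := is_derive_plus _ _ s _ _ D1 D2).
  assert (D4 : is_derive w2 s (plus (B s) (opp (A s)))).
  { apply (is_derive_ext_loc (fun t => plus (RInt B 0 t) (RInt A t 1))); auto.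
    exists (mkposreal (Rmin s (1 - s)) ltac:(apply Rmin_glb_lt; lra)). intros y Hy.
    change (Rabs (y - s) < Rmin s (1 - s)) in Hy. apply Rabs_def2 in Hy.
    assert (Hm1 := Rmin_l s (1 - s)). assert (Hm2 := Rmin_r s (1 - s)).
    rewrite Hrep by lra. reflexivity. }
  apply is_derive_unique in D4. apply is_derive_unique in Hw2.
  assert (E : plus (B s) (opp (A s)) = phi s) by (rewrite <- D4; exact Hw2).
  unfold phi in E. change (plus (B s) (opp (A s))) with (B s + - A s) in E. unfold A, B in E. unfold A, B. lra.
Qed.


Definition Bt (x : R) := if Rle_dec x (1/2) then G2 1 x else G2 0 x + 1.
Definition At (x : R) := if Rle_dec x (1/2) then G2 1 x - 1 else G2 0 x.

Lemma Bt_ctn : ctn 0 1 Bt.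
Proof.
  intros x Hx. destruct (Rlt_dec x 1) as [Hx1|Hx1].
  - apply (ctn_at_ext_loc 0 1 (G2 1) Bt x (1 - x)); try lra.
    + intros y Hy Hyx. apply Rabs_def2 in Hyx. unfold Bt. destruct (Rle_dec y (1/2)); auto.
      pose proof (G2_jump y ltac:(lra)). lra.
    + apply G2_ctn_off; lra.
  - assert (x = 1) by lra. subst x.
    apply (ctn_at_ext_loc 0 1 (fun y => G2 0 y + 1) Bt 1 1); try lra.
    + intros y Hy Hyx. apply Rabs_def2 in Hyx. unfold Bt. destruct (Rle_dec y (1/2)); auto.
      pose proof (G2_jump y ltac:(lra)). lra.
    + apply (ctn_at_plus 0 1 (G2 0) (fun _ => 1)). apply G2_ctn_off; lra. apply ctn_at_const.
Qed.

Lemma At_ctn : ctn 0 1 At.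
Proof.
  intros x Hx. apply (ctn_at_ext 0 1 (fun y => Bt y + (-1))); auto.
  intros y Hy. unfold At, Bt. destruct (Rle_dec y (1/2)); ring.
  apply (ctn_at_plus 0 1 Bt (fun _ => -1)). apply Bt_ctn; auto. apply ctn_at_const.
Qed.

Lemma G2_Bt t x : 0 <= x -> x < t -> t <= 1 -> G2 t x = Bt x.
Proof.
  intros H1 H2 H3. rewrite (G2_right x t) by lra. unfold Bt. destruct (Rle_dec x (1/2)); auto.
  pose proof (G2_jump x ltac:(lra)). lra.
Qed.

Lemma G2_At t x : 0 <= t -> t < x -> x <= 1 -> G2 t x = At x.
Proof.
  intros H1 H2 H3. rewrite (G2_left x t) by lra. unfold At. destruct (Rle_dec x (1/2)); auto.
  pose proof (G2_jump x ltac:(lra)). lra.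
Qed.

Lemma split2_ex (h k1 k2 : R -> R) t : 0 <= t <= 1 -> ctn 0 t k1 -> ctn t 1 k2 ->
  (forall x, 0 < x < t -> h x = k1 x) -> (forall x, t < x < 1 -> h x = k2 x) -> ex_RInt h 0 1.
Proof.
  intros Ht H1 H2 E1 E2.
  destruct (RInt_equiv h k1 0 t ltac:(lra) E1 (ctn_exRInt 0 t k1 ltac:(lra) H1)) as [X1 _].
  destruct (RInt_equiv h k2 t 1 ltac:(lra) E2 (ctn_exRInt t 1 k2 ltac:(lra) H2)) as [X2 _].
  apply (ex_RInt_Chasles h 0 t 1); auto.
Qed.

Lemma G2_ex t psi : 0 <= t <= 1 -> ctn 0 1 psi ->
  ex_RInt (fun s => G2 t s * psi s) 0 1 /\ ex_RInt (fun s => Rabs (G2 t s * psi s)) 0 1.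
Proof.
  intros Ht Hp. split.
  - apply (split2_ex _ (fun s => Bt s * psi s) (fun s => At s * psi s) t Ht).
    + apply (ctn_sub 0 1); try lra. apply ctn_mult; auto. apply Bt_ctn.
    + apply (ctn_sub 0 1); try lra. apply ctn_mult; auto. apply At_ctn.
    + intros x Hx. rewrite (G2_Bt t x) by lra. auto.
    + intros x Hx. rewrite (G2_At t x) by lra. auto.
  - apply (split2_ex _ (fun s => Rabs (Bt s * psi s)) (fun s => Rabs (At s * psi s)) t Ht).
    + apply (ctn_sub 0 1); try lra. apply ctn_abs. apply ctn_mult; auto. apply Bt_ctn.
    + apply (ctn_sub 0 1); try lra. apply ctn_abs. apply ctn_mult; auto. apply At_ctn.
    + intros x Hx. rewrite (G2_Bt t x) by lra. auto.
    + intros x Hx. rewrite (G2_At t x) by lra. auto.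
Qed.

Lemma G2_ex_abs t : 0 <= t <= 1 -> ex_RInt (fun s => Rabs (G2 t s)) 0 1.
Proof.
  intros Ht. destruct (G2_ex t (fun _ => 1) Ht) as [_ H].
  intros x Hx; apply ctn_at_const.
  apply (ex_RInt_ext (fun s => Rabs (G2 t s * 1))); auto. intros; rewrite Rmult_1_r; auto.
Qed.

Lemma repr phi u u1 u2 : cont_on01 phi ->
  is_bvp_solution a1 b1 c1 a2 b2 c2 a3 b3 c3 (fun t _ _ _ => phi t) u u1 u2 ->
  forall t, 0 <= t <= 1 ->
    u t = RInt (fun s => G t s * phi s) 0 1 /\ u1 t = RInt (fun s => G1 t s * phi s) 0 1 /\
    u2 t = RInt (fun s => G2 t s * phi s) 0 1.
Proof.
  intros Hp Hsol. destruct HG as [_ [_ [_ [_ [_ Hex]]]]].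
  destruct (Hex phi Hp) as [HW Huniq].
  set (W0 := fun t => RInt (fun s => G t s * phi s) 0 1) in *.
  set (W1 := fun t => RInt (fun s => G1 t s * phi s) 0 1) in *.
  set (W2 := fun t => RInt (fun s => G2 t s * phi s) 0 1) in *.
  assert (E0 : forall t, 0 <= t <= 1 -> u t = W0 t) by (intros t Ht; apply (Huniq u u1 u2 Hsol t Ht)).
  destruct Hsol as [Cu [Cu1 [Cu2 [Du _]]]]. destruct HW as [CW0 [CW1 [CW2 [DW _]]]].
  assert (loc : forall t, 0 < t < 1 -> forall f g : R -> R, (forall y, 0 <= y <= 1 -> f y = g y) ->
      locally t (fun y => f y = g y)).
  { intros t Ht f g Hfg. exists (mkposreal (Rmin t (1 - t)) ltac:(apply Rmin_glb_lt; lra)). intros y Hy.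
    change (Rabs (y - t) < Rmin t (1 - t)) in Hy. apply Rabs_def2 in Hy.
    assert (Hm1 := Rmin_l t (1 - t)). assert (Hm2 := Rmin_r t (1 - t)). apply Hfg. lra. }
  assert (E1i : forall t, 0 < t < 1 -> u1 t = W1 t).
  { intros t Ht. destruct (Du t Ht) as [D1 _]. destruct (DW t Ht) as [D2 _].
    apply (is_derive_ext_loc u W0) in D1; [|apply loc; auto].
    apply is_derive_unique in D1. apply is_derive_unique in D2. congruence. }
  assert (E1 : forall t, 0 <= t <= 1 -> u1 t = W1 t).
  { intros t Ht. apply (ctn_eq_at 0 1); auto; try lra. apply cont01_ctn; auto. apply cont01_ctn; auto. }
  assert (E2i : forall t, 0 < t < 1 -> u2 t = W2 t).
  { intros t Ht. destruct (Du t Ht) as [_ [D1 _]]. destruct (DW t Ht) as [_ [D2 _]].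
    apply (is_derive_ext_loc u1 W1) in D1; [|apply loc; auto].
    apply is_derive_unique in D1. apply is_derive_unique in D2. congruence. }
  assert (E2 : forall t, 0 <= t <= 1 -> u2 t = W2 t).
  { intros t Ht. apply (ctn_eq_at 0 1); auto; try lra. apply cont01_ctn; auto. apply cont01_ctn; auto. }
  intros t Ht. split; [|split]; auto.
Qed.

End Green.


Lemma bound_gen (k phi : R -> R) M : ex_RInt (fun s => k s * phi s) 0 1 ->
  ex_RInt (fun s => Rabs (k s * phi s)) 0 1 -> ex_RInt (fun s => Rabs (k s)) 0 1 ->
  (forall s, 0 <= s <= 1 -> Rabs (phi s) <= M) ->
  Rabs (RInt (fun s => k s * phi s) 0 1) <= M * RInt (fun s => Rabs (k s)) 0 1.
Proof.
  intros E1 E2 E3 Hb.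
  eapply Rle_trans. apply abs_RInt_le; auto; lra.
  assert (Es : RInt (fun s => M * Rabs (k s)) 0 1 = M * RInt (fun s => Rabs (k s)) 0 1)
    by exact (RInt_scal (V := R_CompleteNormedModule) _ 0 1 M E3).
  rewrite <- Es. apply RInt_le; auto. lra.
  apply (ex_RInt_scal (V := R_NormedModule)); auto.
  intros x Hx. rewrite Rabs_mult, (Rmult_comm M). apply Rmult_le_compat_l. apply Rabs_pos. apply Hb; lra.
Qed.

Lemma cont_full_01 g : (forall t, continuous g t) -> cont_on01 g.
Proof.
  intros H t _. eapply filterlim_filter_le_1; [|apply H]. apply filter_le_within.
Qed.

Lemma cont4_ed (f : R -> R -> R -> R -> R) D t x y z : cont_on4 f D -> D (t, x, y, z) ->
  forall eps, 0 < eps -> exists del, 0 < del /\ forall t' x' y' z', D (t', x', y', z') ->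
    Rabs (t' - t) < del -> Rabs (x' - x) < del -> Rabs (y' - y) < del -> Rabs (z' - z) < del ->
    Rabs (f t' x' y' z' - f t x y z) < eps.
Proof.
  intros Hc HD eps He. specialize (Hc _ HD).
  apply filterlim_locally with (eps := mkposreal eps He) in Hc.
  destruct Hc as [[d Hd] Hc]. exists d. split; auto.
  intros t' x' y' z' HD' H1 H2 H3 H4. apply (Hc (t', x', y', z')); auto.
  split; [split; [split|]|]; assumption.
Qed.

Lemma lip_ctn (g : R -> R) L : (forall s t, 0 <= s <= 1 -> 0 <= t <= 1 -> Rabs (g t - g s) <= L * Rabs (t - s)) ->
  ctn 0 1 g.
Proof.
  intros H x Hx eps He. exists (eps / (Rabs L + 1)). split. apply Rdiv_lt_0_compat; [lra| pose proof (Rabs_pos L); lra].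
  intros y Hy Hyx. eapply Rle_lt_trans. apply H; auto.
  pose proof (Rabs_pos L). pose proof (Rabs_pos (y - x)).
  apply (Rle_lt_trans _ (Rabs L * Rabs (y - x))). apply Rmult_le_compat_r; auto. apply Rle_abs.
  apply (Rle_lt_trans _ (Rabs L * (eps / (Rabs L + 1)))). apply Rmult_le_compat_l; lra.
  replace (Rabs L * (eps / (Rabs L + 1))) with (eps - eps / (Rabs L + 1)) by (field; lra).
  assert (0 < eps / (Rabs L + 1)) by (apply Rdiv_lt_0_compat; lra). lra.
Qed.

Theorem theorem1_pw (PW : PWtype) (a1 b1 c1 a2 b2 c2 a3 b3 c3 : R) (G G1 G2 : R -> R -> R)
  (M0 M1 M2 : R) (f : R -> R -> R -> R -> R) (M : R) :
  rank3_bc a1 b1 c1 a2 b2 c2 a3 b3 c3 ->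
  is_green_function a1 b1 c1 a2 b2 c2 a3 b3 c3 G G1 G2 ->
  is_max01 (fun t => RInt (fun s => Rabs (G t s)) 0 1) M0 ->
  is_max01 (fun t => RInt (fun s => Rabs (G1 t s)) 0 1) M1 ->
  is_max01 (fun t => RInt (fun s => Rabs (G2 t s)) 0 1) M2 ->
  0 < M ->
  cont_on4 f (DM M0 M1 M2 M) ->
  (forall t x y z, DM M0 M1 M2 M (t, x, y, z) -> Rabs (f t x y z) <= M) ->
  exists u u1 u2 : R -> R,
    is_bvp_solution a1 b1 c1 a2 b2 c2 a3 b3 c3 f u u1 u2 /\
    (forall t, 0 <= t <= 1 ->
       Rabs (u t) <= M0 * M /\ Rabs (u1 t) <= M1 * M /\ Rabs (u2 t) <= M2 * M).
Proof.
  intros Hrank HG HM0 HM1 HM2 HMp Hcont Hbound.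
  assert (HM0p : 0 <= M0).
  { destruct HM0 as [_ [t0 [Ht0 E]]]. rewrite <- E. apply RInt_ge_0; [lra| |intros; apply Rabs_pos].
    apply ctn_exRInt; [lra|]. apply ctn_abs. apply (G_ctn _ _ _ _ _ _ _ _ _ G G1 G2 HG); auto. }
  assert (HM1p : 0 <= M1).
  { destruct HM1 as [_ [t0 [Ht0 E]]]. rewrite <- E. apply RInt_ge_0; [lra| |intros; apply Rabs_pos].
    apply ctn_exRInt; [lra|]. apply ctn_abs. apply (G1_ctn _ _ _ _ _ _ _ _ _ G G1 G2 HG); auto. }
  assert (HM2p : 0 <= M2).
  { destruct HM2 as [_ [t0 [Ht0 E]]]. rewrite <- E. apply RInt_ge_0; [lra| |intros; apply Rabs_pos].
    apply (G2_ex_abs _ _ _ _ _ _ _ _ _ G G1 G2 HG); auto. }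
  (* null vector of the first two rows *)
  set (p := b1 * c2 - c1 * b2). set (q := c1 * a2 - a1 * c2). set (r := a1 * b2 - b1 * a2).
  assert (Hnz : ~ (p = 0 /\ q = 0 /\ r = 0)).
  { intros [Hp [Hq Hr]]. unfold p, q, r in *.
    destruct (Req_dec a1 0) as [Ha|Ha].
    - destruct (Req_dec b1 0) as [Hb|Hb].
      + destruct (Req_dec c1 0) as [Hc|Hc].
        * subst. destruct (Hrank 1 0 0) as [H _]; lra.
        * subst. destruct (Hrank c2 (- c1) 0) as [_ [H _]]; try lra.
      + subst. destruct (Hrank b2 (- b1) 0) as [_ [H _]]; try lra.
    - destruct (Hrank a2 (- a1) 0) as [_ [H _]]; try lra. }
  assert (Hcc : cc p q r a3 b3 c3 <> 0).
  { intros Hc0. apply Hnz.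
    destruct HG as [_ [_ [_ [_ [_ Hex]]]]].
    assert (Hz : cont_on01 (fun _ => 0)) by (apply cont_full_01; intros; apply continuous_const).
    destruct (Hex (fun _ => 0) Hz) as [_ Huniq].
    set (P := fun t => p + q * t + r * (t * t / 2)).
    assert (Hsol : is_bvp_solution a1 b1 c1 a2 b2 c2 a3 b3 c3 (fun t _ _ _ => (fun _ : R => 0) t) P
       (fun t => q + r * t) (fun _ => r)).
    { unfold is_bvp_solution, Bform. split; [|split; [|split; [|split; [|split; [|split]]]]].
      - apply cont_full_01. intros t. apply (ex_derive_continuous (K := R_AbsRing) (V := R_NormedModule)).
        unfold P. auto_derive. auto.
      - apply cont_full_01. intros t. apply (ex_derive_continuous (K := R_AbsRing) (V := R_NormedModule)).
        auto_derive. auto.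
      - apply cont_full_01. intros t. apply continuous_const.
      - intros t Ht. split; [|split].
        + unfold P. auto_derive; auto. field.
        + auto_derive; auto. ring.
        + cbv beta. auto_derive; auto.
      - unfold P, p, q, r. field.
      - unfold P, p, q, r. field.
      - unfold P. unfold cc in Hc0. rewrite <- Hc0. field. }
    assert (HP : forall t, 0 <= t <= 1 -> P t = 0).
    { intros t Ht. rewrite (Huniq _ _ _ Hsol t Ht).
      rewrite (RInt_ext _ (fun _ => 0)). rewrite RInt_const. change (scal (1 - 0) 0) with ((1 - 0) * 0). ring.
      intros x _; apply Rmult_0_r. }
    pose proof (HP 0 ltac:(lra)) as P0. pose proof (HP 1 ltac:(lra)) as P1. pose proof (HP (1/2) ltac:(lra)) as P2.
    unfold P in P0, P1, P2. lra. }
  set (A0 := M0 * M) in *. set (A1 := M1 * M) in *. set (A2 := M2 * M) in *.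
  assert (HA0 : 0 <= A0) by (unfold A0; nra). assert (HA1 : 0 <= A1) by (unfold A1; nra).
  assert (HA2 : 0 <= A2) by (unfold A2; nra).
  set (F := fun t x y z => f (clampab 0 1 t) (clampab (-A0) A0 x) (clampab (-A1) A1 y) (clampab (-A2) A2 z)).
  assert (Habs_cl : forall A x, 0 <= A -> Rabs (clampab (-A) A x) <= A).
  { intros A x HA. apply Rabs_le_between. apply clampab_in. lra. }
  assert (HDM : forall t x y z, DM M0 M1 M2 M (clampab 0 1 t, clampab (-A0) A0 x, clampab (-A1) A1 y, clampab (-A2) A2 z)).
  { intros. unfold DM. split; [apply clampab_in; lra|]. split; [|split]; apply Habs_cl; auto. }
  assert (FM : forall t x y z, Rabs (F t x y z) <= M) by (intros; apply Hbound; apply HDM).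
  assert (Fc : Fcont F).
  { intros t x y z eps He. destruct (cont4_ed f _ _ _ _ _ Hcont (HDM t x y z) eps He) as [d [Hd H]].
    exists d. split; auto. intros t' x' y' z' H1 H2 H3 H4. unfold F. apply H; auto;
    (eapply Rle_lt_trans; [apply clampab_lip; lra | auto]). }
  destruct (exist_F PW F M p q r a3 b3 c3 FM Fc Hcc) as [lam [u [u1 [u2 [Hu0 [Hu10 [Hu20 [HB3 [[L HL] Hder]]]]]]]]].
  assert (Cu : ctn 0 1 u) by (apply (lip_ctn u L); intros; apply HL; auto).
  assert (Cu1 : ctn 0 1 u1) by (apply (lip_ctn u1 L); intros; apply HL; auto).
  assert (Cu2 : ctn 0 1 u2) by (apply (lip_ctn u2 L); intros; apply HL; auto).
  set (phi := fun t => F t (u t) (u1 t) (u2 t)).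
  assert (Cphi : ctn 0 1 phi).
  { intros x Hx eps He. destruct (Fc x (u x) (u1 x) (u2 x) eps He) as [dF [HdF HF]].
    destruct (Cu x Hx dF HdF) as [d1 [Hd1 H1]]. destruct (Cu1 x Hx dF HdF) as [d2 [Hd2 H2]].
    destruct (Cu2 x Hx dF HdF) as [d3 [Hd3 H3]].
    exists (Rmin (Rmin dF d1) (Rmin d2 d3)). split. repeat apply Rmin_glb_lt; auto.
    intros y Hy Hyx.
    assert (M1' := Rmin_l (Rmin dF d1) (Rmin d2 d3)). assert (M2' := Rmin_r (Rmin dF d1) (Rmin d2 d3)).
    assert (M3' := Rmin_l dF d1). assert (M4' := Rmin_r dF d1). assert (M5' := Rmin_l d2 d3). assert (M6' := Rmin_r d2 d3).
    unfold phi. apply HF; [lra| apply H1 | apply H2 | apply H3]; auto; lra. }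
  assert (Hsol : is_bvp_solution a1 b1 c1 a2 b2 c2 a3 b3 c3 (fun t _ _ _ => phi t) u u1 u2).
  { unfold is_bvp_solution, Bform. split; [|split; [|split; [|split; [|split; [|split]]]]].
    - apply ctn_cont01; auto.
    - apply ctn_cont01; auto.
    - apply ctn_cont01; auto.
    - intros t Ht. destruct (Hder t Ht) as [D1 [D2 D3]].
      split; [|split]; apply is_derive_Reals; auto.
    - rewrite Hu0, Hu10, Hu20. unfold p, q, r. ring.
    - rewrite Hu0, Hu10, Hu20. unfold p, q, r. ring.
    - auto. }
  assert (Hrep := repr _ _ _ _ _ _ _ _ _ G G1 G2 HG phi u u1 u2 (ctn_cont01 _ Cphi) Hsol).
  assert (Hphi : forall s, 0 <= s <= 1 -> Rabs (phi s) <= M) by (intros; apply FM).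
  assert (Hbounds : forall t, 0 <= t <= 1 -> Rabs (u t) <= A0 /\ Rabs (u1 t) <= A1 /\ Rabs (u2 t) <= A2).
  { intros t Ht. destruct (Hrep t Ht) as [R0 [R1 R2]].
    split; [|split].
    - rewrite R0. eapply Rle_trans. apply bound_gen; auto.
      + apply ctn_exRInt; [lra|]. apply ctn_mult; auto. apply (G_ctn _ _ _ _ _ _ _ _ _ G G1 G2 HG); auto.
      + apply ctn_exRInt; [lra|]. apply ctn_abs. apply ctn_mult; auto. apply (G_ctn _ _ _ _ _ _ _ _ _ G G1 G2 HG); auto.
      + apply ctn_exRInt; [lra|]. apply ctn_abs. apply (G_ctn _ _ _ _ _ _ _ _ _ G G1 G2 HG); auto.
      + destruct HM0 as [HM0' _]. unfold A0. rewrite (Rmult_comm M0). apply Rmult_le_compat_l; [lra|]. apply HM0'; auto.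
    - rewrite R1. eapply Rle_trans. apply bound_gen; auto.
      + apply ctn_exRInt; [lra|]. apply ctn_mult; auto. apply (G1_ctn _ _ _ _ _ _ _ _ _ G G1 G2 HG); auto.
      + apply ctn_exRInt; [lra|]. apply ctn_abs. apply ctn_mult; auto. apply (G1_ctn _ _ _ _ _ _ _ _ _ G G1 G2 HG); auto.
      + apply ctn_exRInt; [lra|]. apply ctn_abs. apply (G1_ctn _ _ _ _ _ _ _ _ _ G G1 G2 HG); auto.
      + destruct HM1 as [HM1' _]. unfold A1. rewrite (Rmult_comm M1). apply Rmult_le_compat_l; [lra|]. apply HM1'; auto.
    - rewrite R2. destruct (G2_ex _ _ _ _ _ _ _ _ _ G G1 G2 HG t phi Ht Cphi) as [E1 E2].
      eapply Rle_trans. apply bound_gen; auto.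
      + apply (G2_ex_abs _ _ _ _ _ _ _ _ _ G G1 G2 HG); auto.
      + destruct HM2 as [HM2' _]. unfold A2. rewrite (Rmult_comm M2). apply Rmult_le_compat_l; [lra|]. apply HM2'; auto. }
  assert (HFf : forall t, 0 <= t <= 1 -> phi t = f t (u t) (u1 t) (u2 t)).
  { intros t Ht. destruct (Hbounds t Ht) as [B0 [B1 B2]].
    apply Rabs_le_between in B0. apply Rabs_le_between in B1. apply Rabs_le_between in B2.
    unfold phi, F. rewrite !clampab_id by lra. reflexivity. }
  exists u, u1, u2. split.
  - destruct Hsol as [C1 [C2 [C3 [D [B1 [B2 B3]]]]]].
    split; [|split; [|split; [|split; [|split; [|split]]]]]; auto.
    intros t Ht. destruct (D t Ht) as [D1 [D2 D3]]. split; [|split]; auto.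
    rewrite <- HFf by lra. exact D3.
  - exact Hbounds.
Qed.

Theorem theorem1 (a1 b1 c1 a2 b2 c2 a3 b3 c3 : R) (G G1 G2 : R -> R -> R)
  (M0 M1 M2 : R) (f : R -> R -> R -> R -> R) (M : R) :
  rank3_bc a1 b1 c1 a2 b2 c2 a3 b3 c3 ->
  is_green_function a1 b1 c1 a2 b2 c2 a3 b3 c3 G G1 G2 ->
  is_max01 (fun t => RInt (fun s => Rabs (G t s)) 0 1) M0 ->
  is_max01 (fun t => RInt (fun s => Rabs (G1 t s)) 0 1) M1 ->
  is_max01 (fun t => RInt (fun s => Rabs (G2 t s)) 0 1) M2 ->
  0 < M ->
  cont_on4 f (DM M0 M1 M2 M) ->
  (forall t x y z, DM M0 M1 M2 M (t, x, y, z) -> Rabs (f t x y z) <= M) ->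
  exists u u1 u2 : R -> R,
    is_bvp_solution a1 b1 c1 a2 b2 c2 a3 b3 c3 f u u1 u2 /\
    (forall t, 0 <= t <= 1 ->
       Rabs (u t) <= M0 * M /\ Rabs (u1 t) <= M1 * M /\ Rabs (u2 t) <= M2 * M).
Proof.
  exact (theorem1_pw MC.pw_cluster a1 b1 c1 a2 b2 c2 a3 b3 c3 G G1 G2 M0 M1 M2 f M).
Qed.
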